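(* Let $M$ be a proper metric space and $\mathcal{X},\mathcal{Y}$ big families in $M$. Then $$0\to CX_\bullet(\mathcal{X}\Cap\mathcal{Y})\to CX_\bullet(\mathcal{X})\oplus CX_\bullet(\mathcal{Y})\to CX_\bullet(\mathcal{X}\Cup\mathcal{Y})\to0$$ is a short exact sequence of chain complexes, where the first map is the diagonal inclusion $\mu\mapsto(\mu,\mu)$ and the second is $(\mu_1,\mu_2)\mapsto\mu_1-\mu_2$. The same holds with each complex replaced by its quotient complex $CX^\alpha_\bullet$ of anti-symmetric coarse chains.
   Context: A big family is a collection of subsets closed under subsets, finite unions and $R$-thickenings; $\mathcal{X}\Cap\mathcal{Y}$ and $\mathcal{X}\Cup\mathcal{Y}$ denote elementwise intersections and unions. With $M^{n+1}$ carrying the max metric and $\Delta_R$ the $R$-thickening of the multi-diagonal, a coarse $n$-chain is a complex-valued locally finite regular Borel measure on $M^{n+1}$ supported in some $\Delta_R$; $CX_n(\mathcal{Y})$ consists of those vanishing outside $Y^{n+1}$ for some $Y\in\mathcal{Y}$; differential $\partial\mu=\sum_i(-1)^i(\pi_i)_*\mu$ with $\pi_i$ omitting coordinate $i$. $CX^\alpha_n(\mathcal{Y})$ is the quotient of $CX_n(\mathcal{Y})$ identifying measures that arise from each other by a signed permutation of the variables (equivalently, identifying measures with equal integrals against all anti-symmetric coarse cochains on $\mathcal{Y}$). *)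

(* Defs.v *)
From HB Require Import structures.
From mathcomp Require Import all_boot all_order all_algebra all_fingroup.
From mathcomp Require Import all_classical all_reals all_analysis.
From mathcomp Require Import complex.
Set Implicit Arguments.
Unset Strict Implicit.
Unset Printing Implicit Defensive.
Import Order.TTheory GRing.Theory Num.Theory.
Local Open Scope classical_set_scope.
Local Open Scope ring_scope.

Section CoarseChains.
Variables (R : realType) (M : metricType R).

Definition proper_space : Prop :=
  forall (x : M) (r : R), compact [set y : M | mdist x y <= r].

Definition thick (Y : set M) (r : R) : set M :=
  [set x | exists2 y, Y y & mdist y x <= r].

Definition big_family (F : set (set M)) : Prop :=
  [/\ F set0,
      (forall Y Z, F Y -> Z `<=` Y -> F Z),
      (forall Y Z, F Y -> F Z -> F (Y `|` Z)) &
      (forall Y r, F Y -> 0 <= r -> F (thick Y r))].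

Definition fcap (F G : set (set M)) : set (set M) :=
  [set Z | exists X Y, [/\ F X, G Y & Z = X `&` Y]].
Definition fcup (F G : set (set M)) : set (set M) :=
  [set Z | exists X Y, [/\ F X, G Y & Z = X `|` Y]].

Definition Pt (k : nat) := {ptws 'I_k -> M}.

Definition pbounded k (A : set (Pt k)) : Prop :=
  exists r : R, forall x y : Pt k, A x -> A y -> forall i, mdist (x i) (y i) <= r.

Definition pborel k (A : set (Pt k)) : Prop := <<s [set: Pt k], open >> A.

Definition bb k (A : set (Pt k)) : Prop := pborel A /\ pbounded A.

Definition diag_thick k (r : R) : set (Pt k) :=
  [set x | exists y : M, forall i, mdist y (x i) <= r].

(** A complex-valued locally finite Borel measure on M^k is represented by its
    values on the delta-ring of bounded Borel sets (on which it is countably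
    additive); by convention it is 0 on all other sets. *)

Definition series_to (u : nat -> R[i]) (l : R[i]) : Prop :=
  forall e : R, 0 < e -> exists N, forall m, (N <= m)%N ->
    Normc.normc ((\sum_(j < m) u j) - l) < e.

Definition is_cmeasure k (mu : set (Pt k) -> R[i]) : Prop :=
  (forall A, ~ bb A -> mu A = 0) /\
  (forall F : nat -> set (Pt k), (forall j, bb (F j)) -> trivIset setT F ->
     pbounded (\bigcup_j F j) -> series_to (fun j => mu (F j)) (mu (\bigcup_j F j))).

Definition tot_variation k (mu : set (Pt k) -> R[i]) (A : set (Pt k)) : \bar R :=
  ereal_sup [set v | exists m (B : 'I_m -> set (Pt k)),
     [/\ (forall j, bb (B j) /\ B j `<=` A),
         (forall j j', j != j' -> B j `&` B j' = set0) &
         v = (\sum_(j < m) Normc.normc (mu (B j)))%:E]].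

Definition locally_finite k (mu : set (Pt k) -> R[i]) : Prop :=
  forall x : Pt k, exists U : set (Pt k), [/\ open U, U x & (tot_variation mu U < +oo)%E].

Definition regular k (mu : set (Pt k) -> R[i]) : Prop :=
  forall A, bb A -> forall e : R, 0 < e -> exists K U : set (Pt k),
    [/\ compact K, K `<=` A, open U, A `<=` U & (tot_variation mu (U `\` K) < e%:E)%E].

Definition vanishes_outside k (mu : set (Pt k) -> R[i]) (S : set (Pt k)) : Prop :=
  forall A, bb A -> A `&` S = set0 -> mu A = 0.

Definition cchain n := set (Pt n.+1) -> R[i].

Definition chain0 n : cchain n := fun _ => 0.
Definition csub n (mu nu : cchain n) : cchain n := fun A => mu A - nu A.

Definition coarse_chain n (mu : cchain n) : Prop :=
  [/\ is_cmeasure mu, locally_finite mu, regular mu &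
      exists r : R, 0 <= r /\ vanishes_outside mu (@diag_thick n.+1 r)].

Definition CX (F : set (set M)) n (mu : cchain n) : Prop :=
  coarse_chain mu /\
  exists Y, F Y /\ vanishes_outside mu [set x : Pt n.+1 | forall i, Y (x i)].

Definition supp_radius k (mu : set (Pt k) -> R[i]) : R :=
  xget 0 [set r : R | 0 <= r /\ vanishes_outside mu (@diag_thick k r)].

Definition face k (i : 'I_k.+1) (x : Pt k.+1) : Pt k := fun j => x (lift i j).

Definition pushface k (i : 'I_k.+1) (mu : set (Pt k.+1) -> R[i]) : set (Pt k) -> R[i] :=
  fun A => if `[< bb A >]
           then mu (face i @^-1` A `&` @diag_thick k.+1 (supp_radius mu))
           else 0.

Definition boundary n (mu : cchain n.+1) : cchain n :=
  fun A => \sum_(i < n.+2) (-1) ^+ i * pushface i mu A.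

Definition spermute n (s : {perm 'I_n.+1}) (mu : cchain n) : cchain n :=
  fun A => (-1) ^+ odd_perm s * mu [set x : Pt n.+1 | A (fun i => x (s i))].

(** the subspace of CX_n(F) spanned by the  mu - s.mu ; CX^alpha_n(F) is the
    quotient of CX_n(F) by it *)
Definition Alt (F : set (set M)) n (nu : cchain n) : Prop :=
  exists m (c : 'I_m -> R[i]) (mus : 'I_m -> cchain n) (ss : 'I_m -> {perm 'I_n.+1}),
    (forall j, CX F (mus j)) /\
    nu = (fun A => \sum_(j < m) c j * (mus j A - spermute (ss j) (mus j) A)).

End CoarseChains.

(* Main.v *)
Require Import Defs.
From HB Require Import structures.
From mathcomp Require Import all_boot all_order all_algebra all_fingroup.
From mathcomp Require Import all_classical all_reals all_analysis.
From mathcomp Require Import complex.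
From mathcomp Require Import ring lra zify.
Import Order.TTheory GRing.Theory Num.Theory.
Local Open Scope classical_set_scope.
Local Open Scope ring_scope.

Set Implicit Arguments.
Unset Strict Implicit.
Unset Printing Implicit Defensive.

Section P1.
Variables (R : realType) (M : metricType R).
Local Notation Pt := (@Pt R M).

Lemma mdsym (x y : M) : mdist x y = mdist y x.
Proof. exact: metric_sym. Qed.

Lemma mdtri (x y z : M) : mdist x z <= mdist x y + mdist y z.
Proof. exact: metric_triangle. Qed.

Lemma md0 (x : M) : mdist x x = 0.
Proof. exact: mdistxx. Qed.

Lemma md_ge0 (x y : M) : 0 <= mdist x y.
Proof. exact: mdist_ge0. Qed.

Lemma mball_open (a : M) (e : R) : open [set y | mdist a y < e].
Proof.
rewrite openE => y /= hy.
have hd : 0 < e - mdist a y by rewrite subr_gt0.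
apply: filterS (nbhsx_ballx y _ hd) => z.
rewrite ballEmdist /= => hz.
rewrite (le_lt_trans (mdtri a y z))//.
by rewrite -ltrBrDl.
Qed.

Lemma proj_cont k (i : 'I_k) : continuous (fun x : Pt k => x i).
Proof. exact: (@proj_continuous 'I_k (fun _ => M) i). Qed.

Lemma cont_ptws (X : topologicalType) l (f : X -> Pt l) :
  (forall j, continuous (fun x => f x j)) -> continuous f.
Proof.
move=> h x.
have FF : Filter (f @ nbhs x) by apply: fmap_filter.
apply/(@cvg_sup _ _ _ (f @ nbhs x) (f x) FF) => i.
move=> A; rewrite nbhsE => -[B [oB Bfx] BA].
case: oB => U oU UB.
apply: (filterS BA).
rewrite -UB /=.
apply: (h i).
apply: open_nbhs_nbhs; split => //.
by rewrite -UB in Bfx.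
Qed.

Lemma face_cont k (i : 'I_k.+1) : continuous (@face R M k i).
Proof. by apply: cont_ptws => j; exact: proj_cont. Qed.

Definition pmap k (s : {perm 'I_k}) (x : Pt k) : Pt k := fun i => x (s i).

Lemma pmap_cont k (s : {perm 'I_k}) : continuous (pmap s).
Proof. by apply: cont_ptws => j; exact: proj_cont. Qed.

Lemma pmapK k (s : {perm 'I_k}) x : pmap (s^-1)%g (pmap s x) = x.
Proof. by apply: functional_extensionality_dep => i; rewrite /pmap permKV. Qed.

Lemma pmapKV k (s : {perm 'I_k}) x : pmap s (pmap (s^-1)%g x) = x.
Proof. by apply: functional_extensionality_dep => i; rewrite /pmap permK. Qed.

Lemma pmapM k (s t : {perm 'I_k}) x : pmap s (pmap t x) = pmap (s * t)%g x.
Proof. by apply: functional_extensionality_dep => i; rewrite /pmap permM. Qed.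

Lemma box_nbhs k (O : 'I_k -> set M) (x : Pt k) :
  (forall l, nbhs (x l) (O l)) -> nbhs x [set y : Pt k | forall l, O l (y l)].
Proof.
move=> hO.
suff H : forall s : seq 'I_k, nbhs x [set y : Pt k | forall l, l \in s -> O l (y l)].
  by apply: filterS (H (enum 'I_k)) => y hy l; apply: hy; rewrite mem_enum.
elim => [|a s IH].
  have F0 : Filter (nbhs x) by apply: nbhs_filter.
  apply: (@filterS _ _ F0 setT); last exact: filterT.
  by move=> y _ l; rewrite in_nil.
have ha : nbhs x [set y : Pt k | O a (y a)].
  have hc := @proj_cont k a x; exact: hc (hO a).
apply: filterS (filterI ha IH) => y [h1 h2] l.
rewrite in_cons => /orP [/eqP -> //|]; exact: h2.
Qed.

Lemma open_box k (O : 'I_k -> set M) :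
  (forall l, open (O l)) -> open [set y : Pt k | forall l, O l (y l)].
Proof.
move=> hO; rewrite openE => x hx; apply: box_nbhs => l.
by apply: open_nbhs_nbhs; split; [exact: hO|exact: hx].
Qed.

Lemma Pt_hausdorff k : hausdorff_space (Pt k).
Proof.
apply: (@hausdorff_product 'I_k (fun _ => M)) => _.
exact: metric_hausdorff.
Qed.

Lemma pborel0 k : pborel (set0 : set (Pt k)).
Proof. exact: sigma_algebra0. Qed.

Lemma pborelC k (A : set (Pt k)) : pborel A -> pborel (~` A).
Proof. by move=> hA; rewrite -setTD; exact: sigma_algebraCD. Qed.

Lemma pborelT k : pborel (setT : set (Pt k)).
Proof. by rewrite -setC0; apply: pborelC; exact: pborel0. Qed.

Lemma pborel_bigcup k (F : nat -> set (Pt k)) :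
  (forall i, pborel (F i)) -> pborel (\bigcup_i F i).
Proof. exact: sigma_algebra_bigcup. Qed.

Lemma pborelU k (A B : set (Pt k)) : pborel A -> pborel B -> pborel (A `|` B).
Proof.
move=> hA hB; rewrite -bigcup2E; apply: pborel_bigcup => -[|[|i]] //=.
exact: pborel0.
Qed.

Lemma pborelI k (A B : set (Pt k)) : pborel A -> pborel B -> pborel (A `&` B).
Proof.
move=> hA hB; rewrite -(setCK (A `&` B)) setCI.
by apply: pborelC; apply: pborelU; exact: pborelC.
Qed.

Lemma pborelD k (A B : set (Pt k)) : pborel A -> pborel B -> pborel (A `\` B).
Proof. by move=> hA hB; rewrite setDE; apply: pborelI => //; exact: pborelC. Qed.

Lemma pborel_open k (A : set (Pt k)) : open A -> pborel A.
Proof. by move=> hA; exact: sub_sigma_algebra. Qed.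

Lemma pborel_closed k (A : set (Pt k)) : closed A -> pborel A.
Proof.
move=> hA; rewrite -(setCK A); apply: pborelC; apply: pborel_open.
exact: closed_openC.
Qed.

Lemma pborel_compact k (A : set (Pt k)) : compact A -> pborel A.
Proof. by move=> hA; apply: pborel_closed; apply: compact_closed => //; exact: Pt_hausdorff. Qed.

Lemma pborel_preimage k l (f : Pt k -> Pt l) (A : set (Pt l)) :
  continuous f -> pborel A -> pborel (f @^-1` A).
Proof.
move=> cf hA.
pose G := [set B : set (Pt l) | pborel (f @^-1` B)].
have sG : sigma_algebra setT G.
  split.
  - by rewrite /G /= preimage_set0; exact: pborel0.
  - move=> B; rewrite /G /= setTD preimage_setC; exact: pborelC.
  - by move=> F hF; rewrite /G /= preimage_bigcup; exact: pborel_bigcup.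
have oG : open `<=` G.
  move=> B oB; rewrite /G /=; apply: pborel_open; apply: open_comp => // x _.
exact: (smallest_sub sG oG hA).
Qed.

Lemma pbounded_sub k (A B : set (Pt k)) : A `<=` B -> pbounded B -> pbounded A.
Proof. by move=> AB [r hr]; exists r => x y /AB hx /AB hy; exact: hr. Qed.

Lemma pbounded0 k : pbounded (set0 : set (Pt k)).
Proof. by exists 0. Qed.

Lemma pboundedU k (A B : set (Pt k)) : pbounded A -> pbounded B -> pbounded (A `|` B).
Proof.
move=> [ra hA] [rb hB].
case: (pselect (exists a, A a)) => [[a Aa]|nA]; last first.
  have -> : A = set0 by apply/seteqP; split => // z Az; exfalso; apply: nA; exists z.
  by rewrite set0U; exists rb.
case: (pselect (exists b, B b)) => [[b Bb]|nB]; last first.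
  have -> : B = set0 by apply/seteqP; split => // z Bz; exfalso; apply: nB; exists z.
  by rewrite setU0; exists ra.
exists (`|ra| + `|rb| + \sum_(i < k) mdist (a i) (b i)) => x y hx hy i.
have hs : mdist (a i) (b i) <= \sum_(j < k) mdist (a j) (b j).
  by rewrite (bigD1 i)//= lerDl sumr_ge0// => j _; exact: md_ge0.
have s0 : 0 <= \sum_(j < k) mdist (a j) (b j) by rewrite sumr_ge0// => j _; exact: md_ge0.
have ra0 : ra <= `|ra| by exact: ler_norm.
have rb0 : rb <= `|rb| by exact: ler_norm.
have ga : 0 <= `|ra| by [].
have gb : 0 <= `|rb| by [].
case: hx => hx; case: hy => hy.
- have := hA x y hx hy i; lra.
- have h1 := hA x a hx Aa i; have h2 := hB b y Bb hy i.
  have := mdtri (x i) (a i) (y i); have := mdtri (a i) (b i) (y i); lra.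
- have h1 := hB x b hx Bb i; have h2 := hA a y Aa hy i.
  have := mdtri (x i) (b i) (y i); have := mdtri (b i) (a i) (y i).
  rewrite (mdsym (b i) (a i)); lra.
- have := hB x y hx hy i; lra.
Qed.

Lemma bbI k (A B : set (Pt k)) : bb A -> pborel B -> bb (A `&` B).
Proof.
move=> [hA bA] hB; split; first exact: pborelI.
by apply: pbounded_sub bA; exact: subIsetl.
Qed.

Lemma bbD k (A B : set (Pt k)) : bb A -> pborel B -> bb (A `\` B).
Proof.
move=> [hA bA] hB; split; first exact: pborelD.
by apply: pbounded_sub bA; exact: subDsetl.
Qed.

Lemma bb0 k : bb (set0 : set (Pt k)).
Proof. by split; [exact: pborel0|exact: pbounded0]. Qed.

Lemma bb_sub k (A B : set (Pt k)) : pborel A -> A `<=` B -> bb B -> bb A.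
Proof. by move=> hA AB [_ hB]; split => //; exact: pbounded_sub hB. Qed.

End P1.

Set Implicit Arguments.
Unset Strict Implicit.
Unset Printing Implicit Defensive.

Section P2.
Variables (R : realType) (M : metricType R).
Local Notation Pt := (@Pt R M).
Local Notation Delta k r := (@diag_thick R M k r).

Lemma diag_mono k (r r' : R) : r <= r' -> Delta k r `<=` Delta k r'.
Proof. by move=> rr x [y hy]; exists y => i; exact: le_trans (hy i) rr. Qed.

Lemma face_diag k (i : 'I_k.+1) r x : Delta k.+1 r x -> Delta k r (face i x).
Proof. by move=> [y hy]; exists y => j; exact: hy. Qed.

Lemma pmap_diag k (s : {perm 'I_k}) r x : Delta k r (pmap s x) <-> Delta k r x.
Proof.
split => -[y hy]; exists y => j.
  by have := hy (s^-1 j)%g; rewrite /pmap permKV.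
exact: hy.
Qed.

Lemma diag_closed k r : proper_space M -> closed (Delta k.+1 r).
Proof.
move=> hp x hx.
pose B := fun e : R => [set c : M | forall l, mdist c (x l) < r + e].
have Bne : forall e, 0 < e -> B e !=set0.
  move=> e e0.
  have hn : nbhs x [set y : Pt k.+1 | forall l, [set z | mdist (x l) z < e] (y l)].
    apply: (@box_nbhs R M k.+1 (fun l => [set z | mdist (x l) z < e]) x) => l; apply: open_nbhs_nbhs; split; first exact: mball_open.
    by rewrite /= md0.
  have [y [[c hc] hy]] := hx _ hn.
  exists c => l; rewrite (le_lt_trans (mdtri c (y l) (x l)))//.
  have h1 := hc l; have h2 : mdist (x l) (y l) < e := hy l.
  rewrite (mdsym (y l)); lra.
have FF : Filter (filter_from [set e : R | 0 < e] B).
  apply: (@filter_from_filter R M [set e : R | 0 < e] B); first by exists 1; rewrite /= ltr01.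
  move=> i j i0 j0; exists (Num.min i j); first by rewrite /= lt_min i0 j0.
  move=> c hc; split => l; rewrite (lt_le_trans (hc l))// lerD2l.
    by rewrite ge_min lexx.
  by rewrite ge_min lexx orbT.
have PF : ProperFilter (filter_from [set e : R | 0 < e] B).
  by apply: filter_from_proper => e e0; exact: Bne.
have KF : filter_from [set e : R | 0 < e] B [set z | mdist (x ord0) z <= r + 1].
  exists 1; first by rewrite /= ltr01.
  move=> c hc; rewrite /= mdsym; exact: ltW (hc ord0).
have [c [_ hc]] := hp (x ord0) (r + 1) _ PF KF.
exists c => l.
apply/ler_addgt0Pr => e e0.
have e20 : 0 < e / 2 by rewrite divr_gt0.
have hB : filter_from [set e : R | 0 < e] B (B (e / 2)) by exists (e / 2).
have hN : nbhs c [set z | mdist c z < e / 2].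
  by apply: open_nbhs_nbhs; split; [exact: mball_open|rewrite /= md0].
have [z [hz1 hz2]] := hc _ _ hB hN.
have := mdtri c z (x l); have := hz1 l; rewrite /= in hz2.
move=> h1 h2; apply: ltW; rewrite (le_lt_trans h2)//.
have -> : r + e = (r + e / 2) + e / 2 by field.
by rewrite addrC ltrD.
Qed.

Lemma diag_borel k r : proper_space M -> pborel (Delta k.+1 r).
Proof. by move=> hp; apply: pborel_closed; exact: diag_closed. Qed.

Lemma face_pre_bounded k (i : 'I_k.+2) r (A : set (Pt k.+1)) :
  pbounded A -> pbounded (face i @^-1` A `&` Delta k.+2 r).
Proof.
move=> [b hb].
pose j := lift i ord0.
exists (`|b| + 4 * `|r|) => x y [hx [cx hcx]] [hy [cy hcy]] l.
have := hb _ _ hx hy ord0; rewrite /face -/j => hj.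
have h1 := hcx l; have h2 := hcx j; have h3 := hcy l; have h4 := hcy j.
have t1 := mdtri (x l) cx (y l).
have t2 := mdtri cx (x j) (y l).
have t3 := mdtri (x j) (y j) (y l).
have t4 := mdtri (y j) cy (y l).
rewrite (mdsym (x l) cx) in t1; rewrite (mdsym (y j) cy) in t4.
have rb : b <= `|b| by exact: ler_norm.
have rr : r <= `|r| by exact: ler_norm.
lra.
Qed.

Lemma face_pre_bb k (i : 'I_k.+2) r (A : set (Pt k.+1)) :
  proper_space M -> bb A -> bb (face i @^-1` A `&` Delta k.+2 r).
Proof.
move=> hp [hA bA]; split; last exact: face_pre_bounded.
apply: pborelI; last exact: diag_borel.
by apply: pborel_preimage => //; exact: face_cont.
Qed.

Lemma pmap_pre_bb k (s : {perm 'I_k}) (A : set (Pt k)) :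
  bb A -> bb (pmap s @^-1` A).
Proof.
move=> [hA [b hb]]; split.
  by apply: pborel_preimage => //; exact: pmap_cont.
by exists b => x y hx hy l; have := hb _ _ hx hy (s^-1 l)%g; rewrite /pmap permKV.
Qed.

Lemma pmap_pre_bbE k (s : {perm 'I_k}) (A : set (Pt k)) :
  bb (pmap s @^-1` A) -> bb A.
Proof.
move=> h; have := pmap_pre_bb (s^-1)%g h.
have -> // : pmap (s^-1)%g @^-1` (pmap s @^-1` A) = A.
by apply/seteqP; split => x /=; rewrite pmapKV.
Qed.

End P2.

Set Implicit Arguments.
Unset Strict Implicit.
Unset Printing Implicit Defensive.

Section P3.
Variables (R : realType) (M : metricType R).
Local Notation Pt := (@Pt R M).
Local Notation Delta k r := (@diag_thick R M k r).
Local Notation nc := (@Normc.normc R).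

Lemma nc_ge0 (x : R[i]) : 0 <= nc x.
Proof. by case: x => a b; rewrite /Normc.normc sqrtr_ge0. Qed.

Lemma nc_add (x y : R[i]) : nc (x + y) <= nc x + nc y.
Proof. exact: (@le_normcD R x y). Qed.

Lemma nc_opp (x : R[i]) : nc (- x) = nc x.
Proof. exact: (@normcN R x). Qed.

Lemma nc_mul (x y : R[i]) : nc (x * y) = nc x * nc y.
Proof. exact: Normc.normcM. Qed.

Lemma nc0 : nc 0 = 0.
Proof. exact: Normc.normc0. Qed.

Lemma nc_eq0 (x : R[i]) : nc x = 0 -> x = 0.
Proof. exact: Normc.eq0_normc. Qed.

Lemma nc_subC (x y : R[i]) : nc (x - y) = nc (y - x).
Proof. by rewrite -nc_opp opprB. Qed.

Lemma nc_sign (b : bool) : nc ((-1) ^+ b) = 1.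
Proof. by case: b; rewrite ?expr1 ?expr0 ?nc_opp Normc.normc1. Qed.

Lemma series_uniq (u : nat -> R[i]) l1 l2 :
  series_to u l1 -> series_to u l2 -> l1 = l2.
Proof.
move=> h1 h2; apply/eqP/negPn/negP => hne.
have hp : 0 < nc (l1 - l2).
  rewrite lt_neqAle nc_ge0 andbT; apply/eqP => /esym /nc_eq0 /eqP.
  by rewrite subr_eq0 (negbTE hne).
have e0 : 0 < nc (l1 - l2) / 2 by rewrite divr_gt0.
have [N1 hN1] := h1 _ e0; have [N2 hN2] := h2 _ e0.
have a1 := hN1 (maxn N1 N2) (leq_maxl _ _).
have a2 := hN2 (maxn N1 N2) (leq_maxr _ _).
set S := \sum_(j < maxn N1 N2) u j in a1 a2.
have : nc (l1 - l2) <= nc (l1 - S) + nc (S - l2).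
  by have := nc_add (l1 - S) (S - l2); rewrite addrA subrK.
rewrite (nc_subC l1 S); lra.
Qed.

Lemma series_ev (u : nat -> R[i]) c N :
  (forall m, (N <= m)%N -> \sum_(j < m) u j = c) -> series_to u c.
Proof. by move=> h e e0; exists N => m hm; rewrite h// subrr nc0. Qed.

Lemma series_add (u v : nat -> R[i]) a b :
  series_to u a -> series_to v b -> series_to (fun j => u j + v j) (a + b).
Proof.
move=> hu hv e e0.
have e20 : 0 < e / 2 by rewrite divr_gt0.
have [N1 h1] := hu _ e20; have [N2 h2] := hv _ e20.
exists (maxn N1 N2) => m hm.
have a1 := h1 m (leq_trans (leq_maxl _ _) hm).
have a2 := h2 m (leq_trans (leq_maxr _ _) hm).
rewrite big_split /=.
have := nc_add (\sum_(j < m) u j - a) (\sum_(j < m) v j - b).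
have -> : \sum_(j < m) u j - a + (\sum_(j < m) v j - b) =
  \sum_(j < m) u j + \sum_(j < m) v j - (a + b) by ring.
lra.
Qed.

Lemma series_scale (u : nat -> R[i]) a c :
  series_to u a -> series_to (fun j => c * u j) (c * a).
Proof.
move=> hu e e0.
have c0 : 0 < nc c + 1 by have := nc_ge0 c; lra.
have e1 : 0 < e / (nc c + 1) by rewrite divr_gt0.
have [N h] := hu _ e1; exists N => m hm.
rewrite -big_distrr /= -mulrBr nc_mul.
have := h m hm => hl.
have hc := nc_ge0 c.
have hs := nc_ge0 (\sum_(j < m) u j - a).
apply: (@le_lt_trans _ _ ((nc c + 1) * nc (\sum_(j < m) u j - a))).
  by rewrite ler_wpM2r// lerDl.
by rewrite -ltr_pdivlMl// mulrC.
Qed.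

Section Meas.
Variable k : nat.
Variable mu : set (Pt k) -> R[i].
Hypothesis hmu : is_cmeasure mu.

Lemma meas_nbb A : ~ bb A -> mu A = 0.
Proof. by case: hmu => h _; exact: h. Qed.

Lemma meas0 : mu set0 = 0.
Proof.
case: hmu => _ hadd.
have := hadd (fun _ => set0) (fun _ => @bb0 R M k) _ _.
rewrite bigcup0 //.
have tr : trivIset setT (fun _ : nat => (set0 : set (Pt k))).
  by move=> i j _ _ [x []].
move=> /(_ tr (@pbounded0 R M k)) hs.
apply/eqP/negPn/negP => hne.
have hp : 0 < nc (mu set0).
  rewrite lt_neqAle nc_ge0 andbT; apply/eqP => /esym /nc_eq0 /eqP.
  by rewrite (negbTE hne).
have [N hN] := hs _ hp.
have := hN N.+2 (leq_trans (leqnSn N) (leqnSn _)).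
rewrite sumr_const card_ord.
set m0 := mu set0.
rewrite [m0 *+ N.+2]mulrS addrC addrK.
rewrite normcMn.
have : nc m0 <= nc m0 *+ N.+1 by rewrite mulrS lerDl mulrn_wge0// nc_ge0.
lra.
Qed.

Lemma measU2 (A B : set (Pt k)) : bb A -> bb B -> A `&` B = set0 ->
  pbounded (A `|` B) -> mu (A `|` B) = mu A + mu B.
Proof.
move=> hA hB hAB hU.
case: hmu => _ hadd.
have hF : forall j, bb (bigcup2 A B j) by case => [|[|j]] //=; exact: bb0.
have := hadd (bigcup2 A B) hF.
rewrite bigcup2E; move=> /(_ _ hU).
have tr : trivIset setT (bigcup2 A B) by rewrite -trivIset_bigcup2.
move=> /(_ tr) hs.
apply: (series_uniq hs); apply: (series_ev (N := 2)) => m hm.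
case: m hm => [|[|m]] // _.
rewrite !big_ord_recl /= big1 ?addr0 //.
by move=> j _; exact: meas0.
Qed.

Lemma measD (A B : set (Pt k)) : bb A -> pborel B ->
  mu A = mu (A `&` B) + mu (A `\` B).
Proof.
move=> hA hB.
have e : A = (A `&` B) `|` (A `\` B).
  apply/seteqP; split => x.
    by move=> Ax; case: (pselect (B x)) => Bx; [left|right].
  by case=> -[].
rewrite {1}e measU2 //.
- exact: bbI.
- exact: bbD.
- by apply/seteqP; split => x // [[_ h1] [_ h2]].
- by rewrite -e; case: hA.
Qed.

Lemma meas_restrict (S A : set (Pt k)) : vanishes_outside mu S -> pborel S -> bb A ->
  mu A = mu (A `&` S).
Proof.
move=> hv hS hA.
rewrite (measD hA hS) [X in _ + X]hv ?addr0 //.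
  exact: bbD.
by apply/seteqP; split => x // [[_ h1] h2].
Qed.

End Meas.

End P3.

Set Implicit Arguments.
Unset Strict Implicit.
Unset Printing Implicit Defensive.

Lemma fincov (X : topologicalType) (K : set X) (U : X -> set X) : compact K ->
  (forall x, K x -> nbhs x (U x)) ->
  exists s : seq X, K `<=` [set y | exists2 x, x \in s & U x y].
Proof.
move=> hK hU.
pose F := filter_from [set: seq X] (fun s0 => [set s : seq X | {subset s0 <= s}]).
have FF : Filter F.
  apply: filter_from_filter; first by exists [::].
  move=> s0 s1 _ _; exists (s0 ++ s1) => // s hs; split => x hx; apply: hs;
    by rewrite mem_cat hx ?orbT.
have := (proj1 (compact_near_coveringP K) hK) (seq X) F
  (fun s y => exists2 x, x \in s & U x y) FF.
case.
- move=> x Kx.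
  exists ((U x), [set s : seq X | x \in s]); first split => //=.
    exact: hU.
  by exists [:: x] => // s; apply; rewrite inE.
  by move=> [y s] /= [h1 h2]; exists x.
- move=> s0 _ h; exists s0; apply: h => //.
Qed.

Section P4.
Variables (R : realType) (M : metricType R).
Local Notation Pt := (@Pt R M).
Local Notation Delta k r := (@diag_thick R M k r).
Local Notation nc := (@Normc.normc R).
Local Notation tv := (@tot_variation R M _).

Lemma tv_ub k (mu : set (Pt k) -> R[i]) S m (B : 'I_m -> set (Pt k)) :
  (forall j, bb (B j) /\ B j `<=` S) ->
  (forall j j', j != j' -> B j `&` B j' = set0) ->
  ((\sum_(j < m) nc (mu (B j)))%:E <= tv mu S)%E.
Proof. by move=> h1 h2; apply: ereal_sup_ubound; exists m, B. Qed.

Lemma tv_ge0 k (mu : set (Pt k) -> R[i]) S : (0 <= tv mu S)%E.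
Proof.
have := @tv_ub k mu S 0 (fun _ => set0) (fun j => match j with Ordinal _ h => False_ind _ (notF h) end)
  (fun j => match j with Ordinal _ h => False_ind _ (notF h) end).
by rewrite big_ord0.
Qed.

Lemma tv_le k (mu : set (Pt k) -> R[i]) S T : S `<=` T -> (tv mu S <= tv mu T)%E.
Proof.
move=> ST; apply: ereal_sup_le => v [m [B [h1 h2 ->]]].
exists m, B; split => // j; have [a b] := h1 j; split => //; exact: subset_trans ST.
Qed.

Lemma tv_transport k l (nu : set (Pt k) -> R[i]) (mu : set (Pt l) -> R[i]) S T
    (phi : set (Pt k) -> set (Pt l)) :
  (forall A, bb A -> A `<=` S -> [/\ bb (phi A), phi A `<=` T & nc (nu A) <= nc (mu (phi A))]) ->
  (forall A B, A `&` B = set0 -> phi A `&` phi B = set0) ->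
  (tv nu S <= tv mu T)%E.
Proof.
move=> h hd; apply: ge_ereal_sup => v [m [B [h1 h2 ->]]].
apply: le_trans (@tv_ub l mu T m (fun j => phi (B j)) _ _).
- rewrite lee_fin; apply: ler_sum => j _.
  by have [a b] := h1 j; have [_ _ ->] := h _ a b.
- by move=> j; have [a b] := h1 j; have [? ? _] := h _ a b.
- by move=> j j' /h2; exact: hd.
Qed.

Lemma tv_add k (nu1 nu2 : set (Pt k) -> R[i]) S :
  (tv (fun A => (nu1 A + nu2 A)%R) S <= tv nu1 S + tv nu2 S)%E.
Proof.
apply: ge_ereal_sup => v [m [B [h1 h2 ->]]].
apply: le_trans (leeD (tv_ub nu1 h1 h2) (tv_ub nu2 h1 h2)).
by rewrite -EFinD lee_fin -big_split /= ler_sum // => j _; exact: nc_add.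
Qed.

Lemma tv_scale k (nu : set (Pt k) -> R[i]) c S :
  (tv (fun A => (c * nu A)%R) S <= (nc c)%:E * tv nu S)%E.
Proof.
apply: ge_ereal_sup => v [m [B [h1 h2 ->]]].
apply: le_trans (lee_wpmul2l _ (tv_ub nu h1 h2)); last by rewrite lee_fin nc_ge0.
by rewrite -EFinM lee_fin big_distrr /= ler_sum // => j _; rewrite nc_mul.
Qed.

Lemma tv_split k (mu : set (Pt k) -> R[i]) S T : is_cmeasure mu -> pborel T ->
  (tv mu S <= tv mu (S `&` T) + tv mu (S `\` T))%E.
Proof.
move=> hmu hT; apply: ge_ereal_sup => v [m [B [h1 h2 ->]]].
have g1 : forall j, bb (B j `&` T) /\ B j `&` T `<=` S `&` T.
  move=> j; have [a b] := h1 j; split; first exact: bbI.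
  by move=> x [/b ? ?]; split.
have g2 : forall j, bb (B j `\` T) /\ B j `\` T `<=` S `\` T.
  move=> j; have [a b] := h1 j; split; first exact: bbD.
  by move=> x [/b ? ?]; split.
have d1 : forall j j', j != j' -> (B j `&` T) `&` (B j' `&` T) = set0.
  move=> j j' /h2 e; apply/seteqP; split => x // [[a _] [b _]].
  by rewrite -e; split.
have d2 : forall j j', j != j' -> (B j `\` T) `&` (B j' `\` T) = set0.
  move=> j j' /h2 e; apply/seteqP; split => x // [[a _] [b _]].
  by rewrite -e; split.
apply: le_trans (leeD (tv_ub mu g1 d1) (tv_ub mu g2 d2)).
rewrite -EFinD lee_fin -big_split /= ler_sum // => j _.
have [a _] := h1 j; rewrite (measD hmu a hT); exact: nc_add.
Qed.

Lemma tv_U k (mu : set (Pt k) -> R[i]) S S1 S2 : is_cmeasure mu -> pborel S1 ->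
  S `<=` S1 `|` S2 -> (tv mu S <= tv mu S1 + tv mu S2)%E.
Proof.
move=> hmu h1 hS; apply: le_trans (tv_split S hmu h1) _.
apply: leeD; apply: tv_le; first by move=> x [].
by move=> x [/hS [] // ? ?].
Qed.

Lemma tv_set0 k (mu : set (Pt k) -> R[i]) : is_cmeasure mu -> tv mu set0 = 0%E.
Proof.
move=> hmu; apply/eqP; rewrite eq_le tv_ge0 andbT.
apply: ge_ereal_sup => v [m [B [h1 h2 ->]]].
rewrite lee_fin big1 // => j _.
have [_ b] := h1 j.
have -> : B j = set0 by apply/seteqP; split => // x /b.
by rewrite meas0 // nc0.
Qed.

Lemma tv_fin_compact k (mu : set (Pt k) -> R[i]) K : is_cmeasure mu ->
  locally_finite mu -> compact K -> (tv mu K < +oo)%E.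
Proof.
move=> hmu hlf hK.
have [U hU] := choice hlf.
have hn : forall x, K x -> nbhs x (U x).
  by move=> x _; have [ho ux _] := hU x; apply: open_nbhs_nbhs.
have [s hs] := fincov hK hn.
apply: le_lt_trans (tv_le _ hs) _.
elim: s {hs} => [|a s IH].
  have -> : [set y | exists2 x, x \in [::] & U x y] = set0.
    by apply/seteqP; split => // y [x].
  by rewrite tv_set0.
have [oa _ fa] := hU a.
apply: le_lt_trans (@tv_U k mu _ (U a) [set y | exists2 x, x \in s & U x y] hmu _ _) _.
- exact: pborel_open.
- move=> y [x]; rewrite in_cons => /orP [/eqP -> |xs Uxy]; first by left.
  by right; exists x.
- exact: lte_add_pinfty.
Qed.

Lemma tv_fin_bb k (mu : set (Pt k) -> R[i]) A : is_cmeasure mu ->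
  locally_finite mu -> regular mu -> bb A -> (tv mu A < +oo)%E.
Proof.
move=> hmu hlf hreg hA.
have [K [U [cK KA oU AU hKU]]] := hreg A hA 1 ltr01.
apply: le_lt_trans (@tv_U k mu A K (U `\` K) hmu _ _) _.
- exact: pborel_compact.
- by move=> x Ax; case: (pselect (K x)) => Kx; [left|right; split => //; exact: AU].
- apply: lte_add_pinfty; first exact: tv_fin_compact.
  exact: lt_trans hKU (ltry _).
Qed.

End P4.

Set Implicit Arguments.
Unset Strict Implicit.
Unset Printing Implicit Defensive.

Section P5.
Variables (R : realType) (M : metricType R).
Local Notation Pt := (@Pt R M).
Local Notation Delta k r := (@diag_thick R M k r).
Local Notation nc := (@Normc.normc R).
Local Notation tv := (@tot_variation R M _).

Definition cadd k (mu nu : set (Pt k) -> R[i]) := fun A => mu A + nu A.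
Definition cscale k (c : R[i]) (mu : set (Pt k) -> R[i]) := fun A => c * mu A.
Definition czero k : set (Pt k) -> R[i] := fun _ => 0.

Section K.
Variable k : nat.
Implicit Types mu nu : set (Pt k) -> R[i].

Lemma cm_zero : is_cmeasure (@czero k).
Proof.
split => // F _ _ _.
by apply: (series_ev (N := 0)) => m _; rewrite big1.
Qed.

Lemma cm_add mu nu : is_cmeasure mu -> is_cmeasure nu -> is_cmeasure (cadd mu nu).
Proof.
move=> [h1 a1] [h2 a2]; split; first by move=> A hA; rewrite /cadd h1 ?h2 ?addr0.
by move=> F hF tF bF; apply: series_add; [exact: a1|exact: a2].
Qed.

Lemma cm_scale c mu : is_cmeasure mu -> is_cmeasure (cscale c mu).
Proof.
move=> [h1 a1]; split; first by move=> A hA; rewrite /cscale h1 ?mulr0.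
by move=> F hF tF bF; apply: series_scale; exact: a1.
Qed.

Lemma lf_zero : locally_finite (@czero k).
Proof.
move=> x; exists setT; split => //; first exact: openT.
apply: le_lt_trans (tv_le _ (@subsetT _ setT)) _.
have : (tv (@czero k) setT <= 0)%E.
  apply: ge_ereal_sup => v [m [B [h1 h2 ->]]].
  by rewrite lee_fin big1 // => j _; rewrite nc0.
move=> h; apply: le_lt_trans h _; exact: ltry.
Qed.

Lemma lf_add mu nu : locally_finite mu -> locally_finite nu -> locally_finite (cadd mu nu).
Proof.
move=> h1 h2 x.
have [U1 [op1 x1 f1]] := h1 x; have [U2 [op2 x2 f2]] := h2 x.
exists (U1 `&` U2); split => //; first exact: openI.
apply: le_lt_trans (tv_add _ _ _) _.
apply: lte_add_pinfty.
  by apply: le_lt_trans f1; apply: tv_le; exact: subIsetl.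
by apply: le_lt_trans f2; apply: tv_le; exact: subIsetr.
Qed.

Lemma fin_tv mu S : (tv mu S < +oo)%E -> tv mu S \is a fin_num.
Proof.
move=> h; apply/fin_numP; split; last by rewrite lt_eqF.
by apply: contraTN isT => /eqP e; have := tv_ge0 mu S; rewrite e.
Qed.

Lemma lf_scale c mu : locally_finite mu -> locally_finite (cscale c mu).
Proof.
move=> h1 x.
have [U1 [op1 x1 f1]] := h1 x.
exists U1; split => //.
apply: le_lt_trans (tv_scale _ _ _) _.
by apply: lte_mul_pinfty => //; rewrite lee_fin nc_ge0.
Qed.

Lemma reg_zero : regular (@czero k).
Proof.
move=> A hA e e0; exists set0, setT; split => //.
- exact: compact0.
- exact: openT.
- have : (tv (@czero k) (setT `\` set0) <= 0)%E.
    apply: ge_ereal_sup => v [m [B [h1 h2 ->]]].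
    by rewrite lee_fin big1 // => j _; rewrite nc0.
  by move=> h; apply: le_lt_trans h _; rewrite lte_fin.
Qed.

Lemma reg_add mu nu : regular mu -> regular nu -> regular (cadd mu nu).
Proof.
move=> h1 h2 A hA e e0.
have e20 : 0 < e / 2 by rewrite divr_gt0.
have [K1 [U1 [c1 k1 op1 u1 t1]]] := h1 A hA _ e20.
have [K2 [U2 [c2 k2 op2 u2 t2]]] := h2 A hA _ e20.
exists (K1 `|` K2), (U1 `&` U2); split.
- exact: compactU.
- by move=> x [];[exact: k1|exact: k2].
- exact: openI.
- by move=> x Ax; split; [exact: u1|exact: u2].
apply: le_lt_trans (tv_add _ _ _) _.
have -> : e = e / 2 + e / 2 by field.
rewrite EFinD; apply: lteD.
  apply: le_lt_trans t1; apply: tv_le => x [[a _] b]; split => // ?; apply: b; by left.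
apply: le_lt_trans t2; apply: tv_le => x [[_ a] b]; split => // ?; apply: b; by right.
Qed.

Lemma reg_scale c mu : regular mu -> regular (cscale c mu).
Proof.
move=> h1 A hA e e0.
have c0 : 0 < nc c + 1 by have := nc_ge0 c; lra.
have e1 : 0 < e / (nc c + 1) by rewrite divr_gt0.
have [K1 [U1 [c1 k1 op1 u1 t1]]] := h1 A hA _ e1.
exists K1, U1; split => //.
apply: le_lt_trans (tv_scale _ _ _) _.
apply: le_lt_trans (lee_wpmul2l _ (ltW t1)) _; first by rewrite lee_fin nc_ge0.
rewrite -EFinM lte_fin.
have hc := nc_ge0 c.
rewrite -(@ltr_pM2l _ (nc c + 1)) // mulrA [_ * nc c]mulrC -mulrA.
have -> : (nc c + 1) * (e / (nc c + 1)) = e by field; rewrite gt_eqF.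
by rewrite mulrDl mul1r ltrDl.
Qed.

Lemma van_mono mu S T : S `<=` T -> vanishes_outside mu S -> vanishes_outside mu T.
Proof.
move=> ST h A hA e; apply: h => //; apply/seteqP; split => x // [Ax Sx].
by rewrite -e; split => //; exact: ST.
Qed.

Lemma van_add mu nu S : vanishes_outside mu S -> vanishes_outside nu S ->
  vanishes_outside (cadd mu nu) S.
Proof. by move=> h1 h2 A hA e; rewrite /cadd h1 ?h2 ?addr0. Qed.

Lemma van_scale c mu S : vanishes_outside mu S -> vanishes_outside (cscale c mu) S.
Proof. by move=> h1 A hA e; rewrite /cscale h1 ?mulr0. Qed.

Lemma van_zero S : vanishes_outside (@czero k) S.
Proof. by []. Qed.

End K.

Section CC.
Variable n : nat.
Implicit Types mu nu : cchain M n.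

Lemma cc_zero : coarse_chain (@czero n.+1).
Proof.
split; [exact: cm_zero|exact: lf_zero|exact: reg_zero|].
by exists 0; split => //; exact: van_zero.
Qed.

Lemma cc_add mu nu : coarse_chain mu -> coarse_chain nu -> coarse_chain (cadd mu nu).
Proof.
move=> [m1 l1 r1 [a [a0 va]]] [m2 l2 r2 [b [b0 vb]]].
split; [exact: cm_add|exact: lf_add|exact: reg_add|].
exists (Num.max a b); split; first by rewrite le_max a0.
apply: van_add.
  by apply: van_mono va; apply: diag_mono; rewrite le_max lexx.
by apply: van_mono vb; apply: diag_mono; rewrite le_max lexx orbT.
Qed.

Lemma cc_scale c mu : coarse_chain mu -> coarse_chain (cscale c mu).
Proof.
move=> [m1 l1 r1 [a [a0 va]]].
split; [exact: cm_scale|exact: lf_scale|exact: reg_scale|].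
by exists a; split => //; exact: van_scale.
Qed.

End CC.

End P5.

Set Implicit Arguments.
Unset Strict Implicit.
Unset Printing Implicit Defensive.

Section P6.
Variables (R : realType) (M : metricType R).
Local Notation Pt := (@Pt R M).
Local Notation Delta k r := (@diag_thick R M k r).
Local Notation nc := (@Normc.normc R).
Local Notation tv := (@tot_variation R M _).

Lemma pmap_pre_bounded k (s : {perm 'I_k}) (A : set (Pt k)) :
  pbounded A -> pbounded (pmap s @^-1` A).
Proof.
move=> [b hb].
by exists b => x y hx hy l; have := hb _ _ hx hy (s^-1 l)%g; rewrite /pmap permKV.
Qed.

Lemma compact_image k l (f : Pt k -> Pt l) K : continuous f -> compact K -> compact (f @` K).
Proof. by move=> cf cK; apply: continuous_compact => //; exact: continuous_subspaceT. Qed.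

Section Perm.
Variable n : nat.
Variable s : {perm 'I_n.+1}.
Implicit Types mu : cchain M n.

Lemma spermuteE mu A : spermute s mu A = (-1) ^+ odd_perm s * mu (pmap s @^-1` A).
Proof. by []. Qed.

Lemma cm_perm mu : is_cmeasure mu -> is_cmeasure (spermute s mu).
Proof.
move=> [h1 a1]; split.
  move=> A hA; rewrite spermuteE h1 ?mulr0 //.
  by move=> /pmap_pre_bbE.
move=> F hF tF bF; rewrite spermuteE.
apply: series_scale.
rewrite [X in series_to _ (mu X)](_ : _ = \bigcup_j (pmap s @^-1` F j)); last first.
  by rewrite preimage_bigcup.
apply: a1.
- by move=> j; apply: pmap_pre_bb.
- by move=> i j _ _ [x [h h']]; apply: tF => //; exists (pmap s x).
- by rewrite -preimage_bigcup; apply: pmap_pre_bounded.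
Qed.

Lemma tv_perm mu S T : pmap s @^-1` S `<=` T ->
  (tv (spermute s mu) S <= tv mu T)%E.
Proof.
move=> ST; apply: (tv_transport (phi := fun A => pmap s @^-1` A)).
  move=> A hA AS; split.
  - exact: pmap_pre_bb.
  - by move=> x /AS /ST.
  - by rewrite spermuteE nc_mul nc_sign mul1r.
move=> A B e; apply/seteqP; split => x // [h h'].
have : (A `&` B) (pmap s x) by split.
by rewrite e.
Qed.

Lemma lf_perm mu : locally_finite mu -> locally_finite (spermute s mu).
Proof.
move=> h x.
have [U [oU xU fU]] := h (pmap (s^-1)%g x).
exists (pmap (s^-1)%g @^-1` U); split => //.
  by apply: open_comp => // y _; exact: pmap_cont.
apply: le_lt_trans fU; apply: tv_perm.
by move=> y /=; rewrite pmapK.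
Qed.

Lemma reg_perm mu : regular mu -> regular (spermute s mu).
Proof.
move=> h A hA e e0.
have [K [U [cK KA oU AU hKU]]] := h _ (pmap_pre_bb s hA) e e0.
exists (pmap s @` K), (pmap (s^-1)%g @^-1` U); split.
- by apply: compact_image => //; exact: pmap_cont.
- by move=> y [x Kx <-]; exact: KA.
- by apply: open_comp => // y _; exact: pmap_cont.
- by move=> a Aa; apply: AU; rewrite /= pmapKV.
apply: le_lt_trans hKU; apply: tv_perm.
move=> x [/= hU hK]; split; first by rewrite pmapK in hU.
by move=> Kx; apply: hK; exists x.
Qed.

Lemma van_perm mu S : (forall x, S (pmap s x) <-> S x) ->
  vanishes_outside mu S -> vanishes_outside (spermute s mu) S.
Proof.
move=> hS hv A hA e; rewrite spermuteE hv ?mulr0 //; first exact: pmap_pre_bb.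
apply/seteqP; split => x // [h h'].
have : (A `&` S) (pmap s x) by split => //; apply/hS.
by rewrite e.
Qed.

Lemma cc_perm mu : coarse_chain mu -> coarse_chain (spermute s mu).
Proof.
move=> [m1 l1 r1 [a [a0 va]]].
split; [exact: cm_perm|exact: lf_perm|exact: reg_perm|].
exists a; split => //; apply: van_perm va => x; exact: pmap_diag.
Qed.

End Perm.

Section Restr.
Variable k : nat.
Variable W : set (Pt k).
Hypothesis hW : pborel W.

Definition crestr (mu : set (Pt k) -> R[i]) : set (Pt k) -> R[i] :=
  fun A => if `[< bb A >] then mu (A `&` W) else 0.

Lemma crestrE mu A : bb A -> crestr mu A = mu (A `&` W).
Proof. by move=> hA; rewrite /crestr asboolT. Qed.

Lemma cm_restr mu : is_cmeasure mu -> is_cmeasure (crestr mu).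
Proof.
move=> [h1 a1]; split; first by move=> A hA; rewrite /crestr asboolF.
move=> F hF tF bF.
have hU : bb (\bigcup_j F j).
  by split => //; apply: pborel_bigcup => j; case: (hF j).
rewrite crestrE // (_ : (fun j => crestr mu (F j)) = (fun j => mu (F j `&` W))); last first.
  by apply: funext => j; rewrite crestrE.
rewrite setI_bigcupl; apply: a1.
- by move=> j; apply: bbI.
- by move=> i j _ _ [x [[h _] [h' _]]]; apply: tF => //; exists x.
- by apply: pbounded_sub bF; apply: subset_bigcup => j _; exact: subIsetl.
Qed.

Lemma tv_restr mu S : (tv (crestr mu) S <= tv mu S)%E.
Proof.
apply: (tv_transport (phi := fun A => A `&` W)).
  move=> A hA AS; split.
  - exact: bbI.
  - by move=> x [/AS].
  - by rewrite crestrE.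
move=> A B e; apply/seteqP; split => x // [[h _] [h' _]].
by rewrite -e; split.
Qed.

Lemma lf_restr mu : locally_finite mu -> locally_finite (crestr mu).
Proof.
move=> h x; have [U [oU xU fU]] := h x.
by exists U; split => //; exact: le_lt_trans (tv_restr _ _) fU.
Qed.

Lemma reg_restr mu : regular mu -> regular (crestr mu).
Proof.
move=> h A hA e e0; have [K [U [cK KA oU AU hKU]]] := h A hA e e0.
by exists K, U; split => //; exact: le_lt_trans (tv_restr _ _) hKU.
Qed.

Lemma van_restr mu S : vanishes_outside mu S -> vanishes_outside (crestr mu) S.
Proof.
move=> hv A hA e; rewrite crestrE // hv //; first exact: bbI.
by apply/seteqP; split => x // [[h _] h']; rewrite -e.
Qed.

End Restr.

Lemma cc_restr n (W : set (Pt n.+1)) (mu : cchain M n) : pborel W ->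
  coarse_chain mu -> coarse_chain (crestr W mu).
Proof.
move=> hW [m1 l1 r1 [a [a0 va]]].
split; [exact: cm_restr|exact: lf_restr|exact: reg_restr|].
by exists a; split => //; exact: van_restr.
Qed.

End P6.

Set Implicit Arguments.
Unset Strict Implicit.
Unset Printing Implicit Defensive.

Section P7.
Variables (R : realType) (M : metricType R).
Local Notation Pt := (@Pt R M).
Local Notation Delta k r := (@diag_thick R M k r).
Local Notation nc := (@Normc.normc R).
Local Notation tv := (@tot_variation R M _).

Definition pbox k (Y : set M) : set (Pt k) := [set x | forall l, Y (x l)].

Lemma bounded_open_sup k (A : set (Pt k)) : pbounded A ->
  exists B, [/\ open B, pbounded B & A `<=` B].
Proof.
move=> [rho hr].
case: (pselect (exists a, A a)) => [[a Aa]|nA]; last first.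
  exists set0; split => //; [exact: open0|exact: pbounded0|].
  by move=> z Az; apply: nA; exists z.
exists [set y : Pt k | forall l, [set z | mdist (a l) z < `|rho| + 1] (y l)]; split.
- by apply: (@open_box R M k (fun l => [set z | mdist (a l) z < `|rho| + 1])) => l; exact: mball_open.
- exists (2 * (`|rho| + 1)) => y z hy hz l.
  have h1 := hy l; have h2 := hz l; rewrite /= in h1 h2.
  have := mdtri (y l) (a l) (z l); rewrite (mdsym (y l) (a l)); lra.
- move=> y Ay l /=; have := hr _ _ Aa Ay l.
  have : rho <= `|rho| by exact: ler_norm.
  lra.
Qed.

Section Push.
Variable k : nat.
Variable i : 'I_k.+2.
Hypothesis hp : proper_space M.
Implicit Types mu : set (Pt k.+2) -> R[i].

Lemma supp_valid mu : (exists r, 0 <= r /\ vanishes_outside mu (Delta k.+2 r)) ->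
  0 <= supp_radius mu /\ vanishes_outside mu (Delta k.+2 (supp_radius mu)).
Proof. by move=> h; have := xgetPex 0 h. Qed.

Lemma pushfaceN mu A : ~ bb A -> pushface i mu A = 0.
Proof. by move=> h; rewrite /pushface asboolF. Qed.

Lemma pushfaceE mu b A : is_cmeasure mu -> 0 <= b -> vanishes_outside mu (Delta k.+2 b) ->
  bb A -> pushface i mu A = mu (face i @^-1` A `&` Delta k.+2 b).
Proof.
move=> hmu b0 vb hA.
rewrite /pushface asboolT //.
have [_ v0] := supp_valid (ex_intro _ b (conj b0 vb)).
set r0 := supp_radius mu in v0 *.
rewrite (meas_restrict hmu vb (diag_borel _ hp) (face_pre_bb _ _ hp hA)).
rewrite [RHS](meas_restrict hmu v0 (diag_borel _ hp) (face_pre_bb _ _ hp hA)).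
by rewrite setIAC.
Qed.

Lemma cm_push mu b : is_cmeasure mu -> 0 <= b -> vanishes_outside mu (Delta k.+2 b) ->
  is_cmeasure (pushface i mu).
Proof.
move=> hmu b0 vb; split; first by move=> A; exact: pushfaceN.
move=> F hF tF bF.
have hU : bb (\bigcup_j F j).
  by split => //; apply: pborel_bigcup => j; case: (hF j).
rewrite (pushfaceE hmu b0 vb hU).
rewrite (_ : (fun j => pushface i mu (F j)) =
   (fun j => mu (face i @^-1` F j `&` Delta k.+2 b))); last first.
  by apply: funext => j; rewrite (pushfaceE hmu b0 vb (hF j)).
rewrite preimage_bigcup setI_bigcupl.
case: hmu => _ a1; apply: a1.
- by move=> j; apply: face_pre_bb.
- by move=> j j' _ _ [x [[h _] [h' _]]]; apply: tF => //; exists (face i x).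
- rewrite -setI_bigcupl -preimage_bigcup; exact: face_pre_bounded.
Qed.

Lemma tv_push mu b S T : is_cmeasure mu -> 0 <= b -> vanishes_outside mu (Delta k.+2 b) ->
  face i @^-1` S `&` Delta k.+2 b `<=` T ->
  (tv (pushface i mu) S <= tv mu T)%E.
Proof.
move=> hmu b0 vb ST.
apply: (tv_transport (phi := fun A => face i @^-1` A `&` Delta k.+2 b)).
  move=> A hA AS; split.
  - exact: face_pre_bb.
  - by move=> x [/AS h1 h2]; apply: ST.
  - by rewrite (pushfaceE hmu b0 vb hA).
move=> A B e; apply/seteqP; split => x // [[h _] [h' _]].
have : (A `&` B) (face i x) by split.
by rewrite e.
Qed.

Lemma lf_push mu b : is_cmeasure mu -> locally_finite mu -> regular mu -> 0 <= b ->
  vanishes_outside mu (Delta k.+2 b) -> locally_finite (pushface i mu).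
Proof.
move=> hmu hlf hreg b0 vb x.
pose U := [set y : Pt k.+1 | forall l, [set z | mdist (x l) z < 1] (y l)].
have oU : open U by apply: (@open_box R M k.+1 (fun l => [set z | mdist (x l) z < 1])) => l; exact: mball_open.
have bU : pbounded U.
  exists 2 => y z hy hz l.
  have h1 := hy l; have h2 := hz l; rewrite /= in h1 h2.
  have := mdtri (y l) (x l) (z l); rewrite (mdsym (y l) (x l)); lra.
exists U; split => //.
  by move=> l /=; rewrite md0.
apply: le_lt_trans (tv_push hmu b0 vb (@subset_refl _ _)) _.
apply: tv_fin_bb => //; apply: face_pre_bb => //.
by split => //; exact: pborel_open.
Qed.

Lemma reg_push mu b : is_cmeasure mu -> regular mu -> 0 <= b ->
  vanishes_outside mu (Delta k.+2 b) -> regular (pushface i mu).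
Proof.
move=> hmu hreg b0 vb A hA e e0.
have [B [oB bB AB]] := bounded_open_sup (proj2 hA).
have bbB : bb B by split => //; exact: pborel_open.
pose D := face i @^-1` B `&` Delta k.+2 b.
pose Ah := face i @^-1` A `&` Delta k.+2 b.
have bD : bb D by exact: face_pre_bb.
have bAh : bb Ah by exact: face_pre_bb.
have e20 : 0 < e / 2 by rewrite divr_gt0.
have [K1 [U1 [c1 k1 op1 u1 t1]]] := hreg Ah bAh _ e20.
have bDA : bb (D `\` Ah) by apply: bbD => //; case: bAh.
have [K2 [U2 [c2 k2 op2 u2 t2]]] := hreg _ bDA _ e20.
have cK2 : compact (face i @` K2) by apply: compact_image => //; exact: face_cont.
exists (face i @` K1), (B `&` ~` (face i @` K2)); split.
- by apply: compact_image => //; exact: face_cont.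
- by move=> y [x /k1 [h _] <-].
- apply: openI => //; apply: closed_openC; apply: compact_closed => //.
  exact: Pt_hausdorff.
- move=> a Aa; split; first exact: AB.
  move=> [x /k2 [[_ xd] xA] ex]; apply: xA; split => //; by rewrite /= ex.
apply: le_lt_trans (@tv_push mu b _ ((U1 `\` K1) `|` (U2 `\` K2)) hmu b0 vb _) _.
  move=> x [[/= [fB fK2] fK1] xd].
  case: (pselect (Ah x)) => hx.
    left; split; first exact: u1.
    by move=> Kx; apply: fK1; exists x.
  right; split; first by apply: u2; split => //; split.
  by move=> Kx; apply: fK2; exists x.
apply: le_lt_trans (tv_U (S1 := U1 `\` K1) (S2 := U2 `\` K2) hmu _ (@subset_refl _ _)) _.
  by apply: pborelD; [exact: pborel_open|exact: pborel_compact].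
have -> : e = e / 2 + e / 2 by field.
by rewrite EFinD; apply: lteD.
Qed.

Lemma van_push_diag mu b : is_cmeasure mu -> 0 <= b ->
  vanishes_outside mu (Delta k.+2 b) -> vanishes_outside (pushface i mu) (Delta k.+1 b).
Proof.
move=> hmu b0 vb A hA e; rewrite (pushfaceE hmu b0 vb hA).
have -> : face i @^-1` A `&` Delta k.+2 b = set0.
  apply/seteqP; split => x // [h h'].
  have : (A `&` Delta k.+1 b) (face i x) by split => //; exact: face_diag.
  by rewrite e.
exact: meas0.
Qed.

Lemma van_push_box mu b Y : is_cmeasure mu -> 0 <= b ->
  vanishes_outside mu (Delta k.+2 b) -> vanishes_outside mu (@pbox k.+2 Y) ->
  vanishes_outside (pushface i mu) (@pbox k.+1 Y).
Proof.
move=> hmu b0 vb vY A hA e; rewrite (pushfaceE hmu b0 vb hA).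
apply: vY; first exact: face_pre_bb.
apply/seteqP; split => x // [[h _] h'].
have : (A `&` @pbox k.+1 Y) (face i x) by split => // l; exact: h'.
by rewrite e.
Qed.

End Push.

Lemma cc_push n (i : 'I_n.+2) (mu : cchain M n.+1) : proper_space M ->
  coarse_chain mu -> coarse_chain (pushface i mu).
Proof.
move=> hp [m1 l1 r1 [a [a0 va]]].
split; [exact: cm_push va|exact: lf_push va|exact: reg_push va|].
by exists a; split => //; exact: van_push_diag.
Qed.

End P7.

Set Implicit Arguments.
Unset Strict Implicit.
Unset Printing Implicit Defensive.

Lemma lift_lift_ij n (i : 'I_n.+3) (j : 'I_n.+2) (k : 'I_n.+1) : (i <= j)%N ->
  lift i (lift j k) = lift (inord j.+1) (lift (inord i) k) :> 'I_n.+3.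
Proof.
move=> ij; apply: val_inj => /=.
have hj : (j.+1 < n.+3)%N by have := ltn_ord j; lia.
have hi : (i < n.+2)%N by have := ltn_ord j; lia.
rewrite /bump !inordK //.
case: (leqP j k) => h1; case: (leqP i k) => h2 /=; lia.
Qed.

Definition psig n (p : 'I_n.+2 * 'I_n.+1) : 'I_n.+2 * 'I_n.+1 :=
  if (p.1 <= p.2)%N then (inord p.2.+1, inord p.1) else (inord p.2, inord p.1.-1).

Lemma psigK n : involutive (@psig n).
Proof.
move=> [i j]; rewrite /psig /=.
have hi := ltn_ord i; have hj := ltn_ord j.
case: (leqP i j) => h /=.
  rewrite !inordK; try lia.
  have -> : (j.+1 <= i)%N = false by lia.
  by congr pair; apply: val_inj; rewrite /= inordK; lia.
rewrite !inordK; try lia.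
have -> : (j <= i.-1)%N = true by lia.
by congr pair; apply: val_inj; rewrite /= inordK; lia.
Qed.

Lemma pair_cancel (K : fieldType) n (F : 'I_n.+2 -> 'I_n.+1 -> K) :
  (2%:R : K) != 0 ->
  (forall (i : 'I_n.+2) (j : 'I_n.+1), (i <= j)%N -> F (inord j.+1) (inord i) = - F i j) ->
  \sum_i \sum_j F i j = 0.
Proof.
move=> h2 hF.
have hall : forall p, F (psig p).1 (psig p).2 = - F p.1 p.2.
  move=> [i j]; rewrite /psig /=; case: (leqP i j) => h /=; first exact: hF.
  set q := (inord j, inord i.-1) : 'I_n.+2 * 'I_n.+1.
  have hq : (q.1 <= q.2)%N.
    rewrite /q /= !inordK; have := ltn_ord i; have := ltn_ord j; lia.
  have := hF _ _ hq.
  have -> : (inord q.2.+1 : 'I_n.+2) = i.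
    apply: val_inj; rewrite /q /= !inordK; have := ltn_ord i; have := ltn_ord j; lia.
  have -> : (inord q.1 : 'I_n.+1) = j.
    apply: val_inj; rewrite /q /= !inordK; have := ltn_ord i; have := ltn_ord j; lia.
  by move=> ->; rewrite opprK.
rewrite pair_big /=.
set S := \sum_p _.
have : S = - S.
  rewrite {1}/S (reindex_inj (inv_inj (@psigK n))) /=.
  by rewrite -sumrN; apply: eq_bigr => p _; rewrite hall.
move/eqP; rewrite -subr_eq0 opprK -mulr2n -mulr_natr mulf_eq0 (negbTE h2) orbF.
by move/eqP.
Qed.

Section P8.
Variables (R : realType) (M : metricType R).
Local Notation Pt := (@Pt R M).
Local Notation Delta k r := (@diag_thick R M k r).
Local Notation nc := (@Normc.normc R).
Local Notation tv := (@tot_variation R M _).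

Lemma sum_closed k (P : (set (Pt k) -> R[i]) -> Prop) :
  P (@czero R M k) -> (forall f g, P f -> P g -> P (cadd f g)) ->
  forall m (f : 'I_m -> set (Pt k) -> R[i]), (forall j, P (f j)) ->
  P (fun A => \sum_(j < m) f j A).
Proof.
move=> h0 hadd; elim => [|m IH] f hf.
  by rewrite (_ : (fun A => _) = @czero R M k) //; apply: funext => A; rewrite big_ord0.
rewrite (_ : (fun A => _) = cadd (fun A => \sum_(j < m) f (widen_ord (leqnSn m) j) A) (f ord_max)).
  by apply: hadd => //; apply: IH.
by apply: funext => A; rewrite big_ord_recr.
Qed.

Hypothesis hp : proper_space M.

Lemma cc_boundary n (mu : cchain M n.+1) : coarse_chain mu -> coarse_chain (boundary mu).
Proof.
move=> hmu.
have := @sum_closed n.+1 (@coarse_chain R M n) _ _ _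
   (fun i => cscale ((-1) ^+ i) (pushface i mu)).
rewrite /boundary /cscale; apply.
- exact: cc_zero.
- by move=> f g; exact: cc_add.
- move=> j; apply: cc_scale; exact: cc_push.
Qed.

Lemma push_add n (i : 'I_n.+2) (mu nu : cchain M n.+1) :
  coarse_chain mu -> coarse_chain nu ->
  pushface i (cadd mu nu) = cadd (pushface i mu) (pushface i nu).
Proof.
move=> [m1 _ _ [a [a0 va]]] [m2 _ _ [b [b0 vb]]].
apply: funext => A; rewrite /cadd.
case: (pselect (bb A)) => hA; last by rewrite !pushfaceN // addr0.
set c := Num.max a b.
have c0 : 0 <= c by rewrite le_max a0.
have vc1 : vanishes_outside mu (Delta n.+2 c).
  by apply: van_mono va; apply: diag_mono; rewrite le_max lexx.
have vc2 : vanishes_outside nu (Delta n.+2 c).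
  by apply: van_mono vb; apply: diag_mono; rewrite le_max lexx orbT.
rewrite !(pushfaceE _ hp _ c0 _ hA) //.
- exact: cm_add.
- exact: van_add.
Qed.

Lemma push_scale n (i : 'I_n.+2) c (mu : cchain M n.+1) :
  coarse_chain mu -> pushface i (cscale c mu) = cscale c (pushface i mu).
Proof.
move=> [m1 _ _ [a [a0 va]]].
apply: funext => A; rewrite /cscale.
case: (pselect (bb A)) => hA; last by rewrite !pushfaceN // mulr0.
rewrite !(pushfaceE _ hp _ a0 _ hA) //.
- exact: cm_scale.
- exact: van_scale.
Qed.

Lemma bd_add n (mu nu : cchain M n.+1) : coarse_chain mu -> coarse_chain nu ->
  boundary (cadd mu nu) = cadd (boundary mu) (boundary nu).
Proof.
move=> h1 h2; apply: funext => A; rewrite /boundary /cadd -big_split /=.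
by apply: eq_bigr => i _; rewrite push_add // /cadd mulrDr.
Qed.

Lemma bd_scale n c (mu : cchain M n.+1) : coarse_chain mu ->
  boundary (cscale c mu) = cscale c (boundary mu).
Proof.
move=> h1; apply: funext => A; rewrite /boundary /cscale big_distrr /=.
by apply: eq_bigr => i _; rewrite push_scale // /cscale mulrCA.
Qed.

Lemma csubE n (mu nu : cchain M n) : csub mu nu = cadd mu (cscale (-1) nu).
Proof. by apply: funext => A; rewrite /csub /cadd /cscale mulN1r. Qed.

Lemma bd_sub n (mu nu : cchain M n.+1) : coarse_chain mu -> coarse_chain nu ->
  boundary (csub mu nu) = csub (boundary mu) (boundary nu).
Proof.
move=> h1 h2; rewrite !csubE bd_add //; last exact: cc_scale.
by rewrite bd_scale.
Qed.

Lemma van_boundary n (mu : cchain M n.+1) r : coarse_chain mu -> 0 <= r ->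
  vanishes_outside mu (Delta n.+2 r) -> vanishes_outside (boundary mu) (Delta n.+1 r).
Proof.
move=> [m1 _ _ _] r0 vr.
have := @sum_closed n.+1 (fun f => vanishes_outside f (Delta n.+1 r)) _ _ _
   (fun i => cscale ((-1) ^+ i) (pushface i mu)).
rewrite /boundary /cscale; apply.
- exact: van_zero.
- by move=> f g; exact: van_add.
- by move=> j; apply: van_scale; apply: van_push_diag.
Qed.

Lemma bdbd n (mu : cchain M n.+2) : coarse_chain mu ->
  boundary (boundary mu) = @chain0 R M n.
Proof.
move=> hmu.
have [m1 _ _ hex] := hmu.
have [r0 vr] := supp_valid hex.
set r := supp_radius mu in r0 vr.
have hnu := cc_boundary hmu.
have [mnu _ _ _] := hnu.
have vnu := van_boundary hmu r0 vr.
apply: funext => A; rewrite /chain0 /boundary.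
case: (pselect (bb A)) => hA; last first.
  by rewrite big1 // => j _; rewrite pushfaceN // mulr0.
pose G (i : 'I_n.+3) (j : 'I_n.+2) := [set x : Pt n.+3 | A (face j (face i x))] `&` Delta n.+3 r.
have hj : forall j : 'I_n.+2, pushface j (boundary mu) A =
    \sum_(i < n.+3) (-1) ^+ i * mu (G i j).
  move=> j; rewrite (pushfaceE _ hp mnu r0 vnu hA) /boundary.
  apply: eq_bigr => i _; congr (_ * _).
  rewrite (pushfaceE _ hp m1 r0 vr (face_pre_bb _ _ hp hA)).
  congr mu; apply/seteqP; split => x.
    by move=> [[h _] h']; split.
  by move=> [h h']; split => //; split => //; exact: face_diag.
under eq_bigr do rewrite hj big_distrr /=.
rewrite exchange_big /=.
apply: (@pair_cancel _ n.+1 (fun i j => (-1) ^+ j * ((-1) ^+ i * mu (G i j)))).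
  by rewrite pnatr_eq0.
move=> i j ij.
have e : forall x : Pt n.+3, face (inord i) (face (inord j.+1) x) = face j (face i x).
  move=> x; apply: functional_extensionality_dep => l.
  by rewrite /face /= (lift_lift_ij _ ij).
have -> : G (inord j.+1) (inord i) = G i j.
  by rewrite /G; apply/seteqP; split => x [h1 h2]; split => //=; [rewrite -e|rewrite e].
have hi : (i < n.+2)%N by have := ltn_ord j; lia.
have hj1 : (j.+1 < n.+3)%N by have := ltn_ord j; lia.
rewrite !inordK // exprS; ring.
Qed.

End P8.

Set Implicit Arguments.
Unset Strict Implicit.
Unset Printing Implicit Defensive.

Section P9.
Variables (R : realType) (M : metricType R).
Local Notation Pt := (@Pt R M).
Local Notation Delta k r := (@diag_thick R M k r).

Definition famOK (F : set (set M)) :=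
  (exists Y, F Y) /\ (forall Y1 Y2, F Y1 -> F Y2 -> exists2 Z, F Z & Y1 `|` Y2 `<=` Z).

Definition famsub (F G : set (set M)) := forall Y, F Y -> exists2 Z, G Z & Y `<=` Z.

Lemma pbox_mono k (Y Z : set M) : Y `<=` Z -> @pbox R M k Y `<=` @pbox R M k Z.
Proof. by move=> YZ x hx l; apply: YZ; exact: hx. Qed.

Section CXF.
Variable F : set (set M).
Hypothesis hF : famOK F.
Variable n : nat.
Implicit Types mu nu : cchain M n.

Lemma CX_zero : CX F (@czero R M n.+1).
Proof.
split; first exact: cc_zero.
by have [[Y FY] _] := hF; exists Y; split => //; exact: van_zero.
Qed.

Lemma CX_add mu nu : CX F mu -> CX F nu -> CX F (cadd mu nu).
Proof.
move=> [c1 [Y1 [F1 v1]]] [c2 [Y2 [F2 v2]]]; split; first exact: cc_add.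
have [_ hU] := hF; have [Z FZ sZ] := hU _ _ F1 F2.
exists Z; split => //; apply: van_add.
  by apply: van_mono v1; apply: pbox_mono => x h; apply: sZ; left.
by apply: van_mono v2; apply: pbox_mono => x h; apply: sZ; right.
Qed.

Lemma CX_scale c mu : CX F mu -> CX F (cscale c mu).
Proof.
move=> [c1 [Y1 [F1 v1]]]; split; first exact: cc_scale.
by exists Y1; split => //; exact: van_scale.
Qed.

Lemma CX_sub mu nu : CX F mu -> CX F nu -> CX F (csub mu nu).
Proof. by move=> h1 h2; rewrite csubE; apply: CX_add => //; exact: CX_scale. Qed.

Lemma CX_perm s mu : CX F mu -> CX F (spermute s mu).
Proof.
move=> [c1 [Y1 [F1 v1]]]; split; first exact: cc_perm.
exists Y1; split => //; apply: van_perm v1 => x; split => h l.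
  by have := h (s^-1 l)%g; rewrite /pmap permKV.
exact: h.
Qed.

Lemma CX_sum m (f : 'I_m -> cchain M n) : (forall j, CX F (f j)) ->
  CX F (fun A => \sum_(j < m) f j A).
Proof.
by apply: (sum_closed (P := @CX R M F n)); [exact: CX_zero|exact: CX_add].
Qed.

End CXF.

Lemma CX_push F n (i : 'I_n.+2) (mu : cchain M n.+1) : proper_space M ->
  CX F mu -> CX F (pushface i mu).
Proof.
move=> hp [c1 [Y1 [F1 v1]]]; split; first exact: cc_push.
have [m1 _ _ [a [a0 va]]] := c1.
by exists Y1; split => //; exact: van_push_box va v1.
Qed.

Lemma CX_bd F n (mu : cchain M n.+1) : proper_space M -> famOK F ->
  CX F mu -> CX F (boundary mu).
Proof.
move=> hp hF hmu.
have := @CX_sum F hF n n.+2 (fun i => cscale ((-1) ^+ i) (pushface i mu)).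
rewrite /boundary /cscale; apply => j.
by apply: CX_scale; exact: CX_push.
Qed.

Lemma CX_mono F G n (mu : cchain M n) : famsub F G -> CX F mu -> CX G mu.
Proof.
move=> hFG [c1 [Y1 [F1 v1]]]; split => //.
have [Z GZ sZ] := hFG _ F1.
by exists Z; split => //; apply: van_mono v1; exact: pbox_mono.
Qed.

Definition onbhd (X : set M) : set M := [set z | exists2 y, X y & mdist y z < 1].

Lemma onbhd_open X : open (onbhd X).
Proof.
have -> : onbhd X = \bigcup_(y in X) [set z | mdist y z < 1].
  by apply/seteqP; split => z [y Xy h]; exists y.
by apply: bigcup_open => y _; exact: mball_open.
Qed.

Lemma onbhd_thick X : onbhd X `<=` thick X 1.
Proof. by move=> z [y Xy h]; exists y => //; exact: ltW. Qed.

Lemma sub_onbhd X : X `<=` onbhd X.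
Proof. by move=> z Xz; exists z => //; rewrite md0. Qed.

Lemma pbox_open k X : open (@pbox R M k (onbhd X)).
Proof. by apply: (@open_box R M k (fun=> onbhd X)) => l; exact: onbhd_open. Qed.

Section Fams.
Variables (FX FY : set (set M)).
Hypotheses (bX : big_family FX) (bY : big_family FY).

Lemma big_famOK F : big_family F -> famOK F.
Proof.
move=> [h0 hs hu ht]; split; first by exists set0.
by move=> Y1 Y2 h1 h2; exists (Y1 `|` Y2) => //; exact: hu.
Qed.

Lemma famOK_I : famOK (fcap FX FY).
Proof.
have [x0 xs xu xt] := bX; have [y0 ys yu yt] := bY.
split; first by exists set0, set0, set0; split => //; rewrite setI0.
move=> _ _ [X1 [Y1 [h1 h2 ->]]] [X2 [Y2 [h3 h4 ->]]].
exists ((X1 `|` X2) `&` (Y1 `|` Y2)); first by exists (X1 `|` X2), (Y1 `|` Y2); split => //; [exact: xu|exact: yu].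
by move=> z [[a b]|[a b]]; split; by [left|right].
Qed.

Lemma famOK_U : famOK (fcup FX FY).
Proof.
have [x0 xs xu xt] := bX; have [y0 ys yu yt] := bY.
split; first by exists set0, set0, set0; split => //; rewrite setU0.
move=> _ _ [X1 [Y1 [h1 h2 ->]]] [X2 [Y2 [h3 h4 ->]]].
exists ((X1 `|` X2) `|` (Y1 `|` Y2)); first by exists (X1 `|` X2), (Y1 `|` Y2); split => //; [exact: xu|exact: yu].
by move=> z [[a|a]|[a|a]]; by [left; left|right; left|left; right|right; right].
Qed.

Lemma famsub_IX : famsub (fcap FX FY) FX.
Proof. by move=> _ [X [Y [h1 h2 ->]]]; exists X => // z []. Qed.

Lemma famsub_IY : famsub (fcap FX FY) FY.
Proof. by move=> _ [X [Y [h1 h2 ->]]]; exists Y => // z []. Qed.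

Lemma famsub_XU : famsub FX (fcup FX FY).
Proof.
have [y0 _ _ _] := bY.
by move=> X hX; exists (X `|` set0); [exists X, set0|rewrite setU0].
Qed.

Lemma famsub_YU : famsub FY (fcup FX FY).
Proof.
have [x0 _ _ _] := bX.
by move=> Y hY; exists (set0 `|` Y); [exists set0, Y|rewrite set0U].
Qed.

Lemma CX_inter n (mu : cchain M n) : CX FX mu -> CX FY mu -> CX (fcap FX FY) mu.
Proof.
move=> [c1 [X [hX vX]]] [_ [Y [hY vY]]]; split => //.
have [x0 xs xu xt] := bX; have [y0 ys yu yt] := bY.
exists (thick X 1 `&` thick Y 1); split.
  by exists (thick X 1), (thick Y 1); split => //; [exact: xt|exact: yt].
have [m1 _ _ _] := c1.
have vX' : vanishes_outside mu (@pbox R M n.+1 (onbhd X)).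
  by apply: van_mono vX; apply: pbox_mono; exact: sub_onbhd.
have vY' : vanishes_outside mu (@pbox R M n.+1 (onbhd Y)).
  by apply: van_mono vY; apply: pbox_mono; exact: sub_onbhd.
move=> A hA e.
rewrite (meas_restrict m1 vX' (pborel_open (pbox_open _ _)) hA).
rewrite (meas_restrict m1 vY' (pborel_open (pbox_open _ _)) (bbI hA (pborel_open (pbox_open _ _)))).
have -> : A `&` pbox (onbhd X) `&` pbox (onbhd Y) = set0.
  apply/seteqP; split => x // [[Ax hx] hy].
  have : (A `&` pbox (thick X 1 `&` thick Y 1)) x.
    by split => // l; split; apply: onbhd_thick; [exact: hx|exact: hy].
  by rewrite e.
exact: meas0.
Qed.

Lemma CX_split n (nu : cchain M n) : proper_space M -> CX (fcup FX FY) nu ->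
  exists mu1 mu2, [/\ CX FX mu1, CX FY mu2 & nu = csub mu1 mu2].
Proof.
move=> hp [c1 [_ [[X [Y [hX hY ->]]] vZ]]].
have [m1 _ _ [r [r0 vr]]] := c1.
pose W := [set x : Pt n.+1 | onbhd X (x ord0)].
have oW : open W.
  by apply: open_comp; [move=> x _; exact: proj_cont|exact: onbhd_open].
have bW : pborel W by exact: pborel_open.
have bW' : pborel (~` W) by exact: pborelC.
have [x0 xs xu xt] := bX; have [y0 ys yu yt] := bY.
have r21 : 0 <= 2 * r + 1 by lra.
have r2 : 0 <= 2 * r by lra.
exists (crestr W nu), (cscale (-1) (crestr (~` W) nu)); split.
- split; first exact: cc_restr.
  exists (thick X (2 * r + 1)); split; first exact: xt.
  move=> A hA e; rewrite crestrE //.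
  rewrite (meas_restrict m1 vr (diag_borel _ hp) (bbI hA bW)).
  have -> : A `&` W `&` Delta n.+1 r = set0.
    apply/seteqP; split => x // [[Ax [y Xy hy]] [c hc]].
    have : (A `&` pbox (thick X (2 * r + 1))) x.
      split => // l; exists y => //.
      have := mdtri y (x ord0) (x l); have := mdtri (x ord0) c (x l).
      have := hc ord0; have := hc l; rewrite (mdsym (x ord0) c); lra.
    by rewrite e.
  exact: meas0.
- split; first by apply: cc_scale; exact: cc_restr.
  exists (thick Y (2 * r)); split; first exact: yt.
  move=> A hA e; rewrite /cscale crestrE //.
  rewrite (meas_restrict m1 vr (diag_borel _ hp) (bbI hA bW')).
  rewrite vZ ?mulr0 //; first by apply: bbI; [exact: bbI|exact: diag_borel].
  apply/seteqP; split => x // [[[Ax nW] [c hc]] hZ].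
  have : (A `&` pbox (thick Y (2 * r))) x.
    split => // l.
    have Y0 : Y (x ord0).
      case: (hZ ord0) => // X0; exfalso; apply: nW; exact: sub_onbhd.
    exists (x ord0) => //.
    have := mdtri (x ord0) c (x l).
    have := hc ord0; have := hc l; rewrite (mdsym (x ord0) c); lra.
  by rewrite e.
- apply: funext => A; rewrite /csub /cscale.
  case: (pselect (bb A)) => hA; last first.
    by rewrite /crestr !asboolF // (meas_nbb m1 hA) mulr0 subr0.
  rewrite !crestrE // mulN1r opprK (measD m1 hA bW).
  by rewrite setDE.
Qed.

End Fams.

End P9.

Set Implicit Arguments.
Unset Strict Implicit.
Unset Printing Implicit Defensive.

Lemma splitL m1 m2 (a : 'I_m1) : fintype.split (lshift m2 a) = inl a.
Proof. exact: (unsplitK (inl _ a)). Qed.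

Lemma splitR m1 m2 (b : 'I_m2) : fintype.split (rshift m1 b) = inr b.
Proof. exact: (unsplitK (inr _ b)). Qed.

Lemma sum_enum_val (K : nmodType) (T : finType) (f : T -> K) :
  \sum_(k < #|T|) f (enum_val k) = \sum_x f x.
Proof.
rewrite (reindex (@enum_val T T)) //.
by apply: onW_bij; exact: enum_val_bij.
Qed.

Section P10.
Variables (R : realType) (M : metricType R).
Local Notation Pt := (@Pt R M).

Section AltF.
Variable F : set (set M).
Variable n : nat.
Implicit Types mu nu : cchain M n.

Lemma Alt_zero : Alt F (@czero R M n.+1).
Proof.
exists 0, (fun _ => 0), (fun _ => @czero R M n.+1), (fun _ => 1%g); split.
  by case.
by apply: funext => A; rewrite big_ord0.
Qed.

Lemma Alt_add nu1 nu2 : Alt F nu1 -> Alt F nu2 -> Alt F (cadd nu1 nu2).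
Proof.
move=> [m1 [c1 [f1 [s1 [h1 ->]]]]] [m2 [c2 [f2 [s2 [h2 ->]]]]].
exists (m1 + m2),
  (fun k => match fintype.split k with inl a => c1 a | inr b => c2 b end),
  (fun k => match fintype.split k with inl a => f1 a | inr b => f2 b end),
  (fun k => match fintype.split k with inl a => s1 a | inr b => s2 b end); split.
  by move=> k; case: (fintype.split k) => a.
apply: funext => A; rewrite /cadd big_split_ord /=.
by congr (_ + _); apply: eq_bigr => j _; rewrite ?splitL ?splitR.
Qed.

Lemma Alt_scale c nu : Alt F nu -> Alt F (cscale c nu).
Proof.
move=> [m1 [c1 [f1 [s1 [h1 ->]]]]].
exists m1, (fun j => c * c1 j), f1, s1; split => //.
by apply: funext => A; rewrite /cscale big_distrr /=; apply: eq_bigr => j _; rewrite mulrA.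
Qed.

Lemma Alt_basic s mu : CX F mu -> Alt F (fun A => mu A - spermute s mu A).
Proof.
move=> h; exists 1, (fun _ => 1), (fun _ => mu), (fun _ => s); split => //.
by apply: funext => A; rewrite big_ord1 mul1r.
Qed.

Lemma Alt_sum m (f : 'I_m -> cchain M n) : (forall j, Alt F (f j)) ->
  Alt F (fun A => \sum_(j < m) f j A).
Proof.
by apply: (sum_closed (P := @Alt R M F n)); [exact: Alt_zero|exact: Alt_add].
Qed.

Lemma Alt_CX nu : famOK F -> Alt F nu -> CX F nu.
Proof.
move=> hF [m1 [c1 [f1 [s1 [h1 ->]]]]].
have := @CX_sum R M F hF n m1 (fun j => cscale (c1 j) (csub (f1 j) (spermute (s1 j) (f1 j)))).
rewrite /cscale /csub; apply => j.
by apply: CX_scale; apply: CX_sub => //; exact: CX_perm.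
Qed.

End AltF.

Lemma Alt_mono F G n (nu : cchain M n) : (forall mu : cchain M n, CX F mu -> CX G mu) ->
  Alt F nu -> Alt G nu.
Proof.
move=> hFG [m1 [c1 [f1 [s1 [h1 ->]]]]].
by exists m1, c1, f1, s1; split => // j; apply: hFG.
Qed.

Lemma spermuteM n (s t : {perm 'I_n.+1}) (mu : cchain M n) :
  spermute s (spermute t mu) = spermute (s * t)%g mu.
Proof.
apply: funext => A; rewrite !spermuteE mulrA -signr_addb -odd_permM.
congr (_ * mu _); apply/seteqP; split => x /=; by rewrite pmapM.
Qed.

Section Palt.
Variable n : nat.
Local Notation N := #|{perm 'I_n.+1}|.

Definition Palt (mu : cchain M n) : cchain M n :=
  fun A => (N%:R)^-1 * \sum_(s : {perm 'I_n.+1}) spermute s mu A.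

Lemma N_neq0 : (N%:R : R[i]) != 0.
Proof. by rewrite pnatr_eq0 card_Sn -lt0n fact_gt0. Qed.

Lemma Alt_P0 F (nu : cchain M n) : Alt F nu -> Palt nu = @czero R M n.+1.
Proof.
move=> [m1 [c1 [f1 [s1 [h1 ->]]]]].
apply: funext => A; rewrite /Palt /czero.
have e : forall s : {perm 'I_n.+1},
    spermute s (fun A => \sum_(j < m1) c1 j * (f1 j A - spermute (s1 j) (f1 j) A)) A =
    \sum_(j < m1) c1 j * (spermute s (f1 j) A - spermute (s * s1 j)%g (f1 j) A).
  move=> s; rewrite spermuteE big_distrr /=; apply: eq_bigr => j _.
  by rewrite -spermuteM !spermuteE mulrCA mulrBr.
rewrite (eq_bigr _ (fun s _ => e s)) exchange_big /=.
rewrite big1 ?mulr0 // => j _.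
rewrite -big_distrr /= sumrB.
rewrite [X in X - _](reindex_inj (mulIg (s1 j))) /=.
by rewrite subrr mulr0.
Qed.

Lemma Palt_sub (mu nu : cchain M n) : Palt (csub mu nu) = csub (Palt mu) (Palt nu).
Proof.
apply: funext => A; rewrite /Palt /csub -mulrBr -sumrB; congr (_ * _).
by apply: eq_bigr => s _; rewrite !spermuteE mulrBr.
Qed.

Lemma Alt_decomp F (mu : cchain M n) : CX F mu -> Alt F (csub mu (Palt mu)).
Proof.
move=> h.
exists N, (fun _ => (N%:R)^-1), (fun _ => mu),
  (fun k => @enum_val {perm 'I_n.+1} {perm 'I_n.+1} k); split => //.
apply: funext => A; rewrite /csub /Palt -big_distrr /= sumrB.
rewrite (sum_enum_val (fun s => spermute s mu A)).
rewrite sumr_const card_ord mulrBr.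
have hN := N_neq0.
congr (_ - _).
by rewrite -[mu A *+ _]mulr_natr mulrCA mulVf // mulr1.
Qed.

Lemma Alt_of_P0 F (mu : cchain M n) : CX F mu -> Palt mu = @czero R M n.+1 -> Alt F mu.
Proof.
move=> h e; have := Alt_decomp h; rewrite e.
by rewrite (_ : csub mu _ = mu) //; apply: funext => A; rewrite /csub /czero subr0.
Qed.

Lemma CX_Palt F (mu : cchain M n) : famOK F -> CX F mu -> CX F (Palt mu).
Proof.
move=> hF h.
rewrite (_ : Palt mu = cscale ((N%:R)^-1)
   (fun A => \sum_(k < N) spermute (@enum_val {perm 'I_n.+1} {perm 'I_n.+1} k) mu A)).
  apply: CX_scale; apply: CX_sum => // k; exact: CX_perm.
apply: funext => A; rewrite /Palt /cscale; congr (_ * _).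
by rewrite (sum_enum_val (fun s => spermute s mu A)).
Qed.

End Palt.

End P10.

Set Implicit Arguments.
Unset Strict Implicit.
Unset Printing Implicit Defensive.

Section Tperm.
Variable n : nat.
Variable s : {perm 'I_n.+2}.
Variable i : 'I_n.+2.

Definition tfun (k : 'I_n.+1) : 'I_n.+1 := odflt k (unlift (s i) (s (lift i k))).

Lemma tfunP k : lift (s i) (tfun k) = s (lift i k).
Proof.
rewrite /tfun; case: unliftP => [j e|e] //=.
by move/perm_inj: e => /eqP; rewrite eq_sym (negbTE (neq_lift _ _)).
Qed.

Lemma tfun_inj : injective tfun.
Proof.
move=> k1 k2 e.
have : lift (s i) (tfun k1) = lift (s i) (tfun k2) by rewrite e.
by rewrite !tfunP => /perm_inj /lift_inj.
Qed.

Definition tperm : {perm 'I_n.+1} := perm tfun_inj.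

Lemma tpermP k : lift (s i) (tperm k) = s (lift i k).
Proof. by rewrite permE tfunP. Qed.

Lemma s_lift_perm : s = lift_perm i (s i) tperm.
Proof.
apply/permP => x; case: (unliftP i x) => [k ->|->].
  by rewrite lift_perm_lift tpermP.
by rewrite lift_perm_id.
Qed.

Lemma odd_tperm : odd_perm s = odd i (+) odd (s i) (+) odd_perm tperm.
Proof. by rewrite {1}s_lift_perm odd_lift_perm. Qed.

End Tperm.

Section P11.
Variables (R : realType) (M : metricType R).
Local Notation Pt := (@Pt R M).
Local Notation Delta k r := (@diag_thick R M k r).
Hypothesis hp : proper_space M.

Lemma face_pmap n (s : {perm 'I_n.+2}) (i : 'I_n.+2) (x : Pt n.+2) :
  face i (pmap s x) = pmap (tperm s i) (face (s i) x).
Proof.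
by apply: functional_extensionality_dep => k; rewrite /face /pmap /= tpermP.
Qed.

Lemma push_perm n (s : {perm 'I_n.+2}) (i : 'I_n.+2) (mu : cchain M n.+1) :
  coarse_chain mu ->
  pushface i (spermute s mu) =
  cscale ((-1) ^+ (odd i (+) odd (s i))) (spermute (tperm s i) (pushface (s i) mu)).
Proof.
move=> [m1 _ _ [a [a0 va]]].
have mp := cm_perm s m1.
have vp : vanishes_outside (spermute s mu) (Delta n.+2 a).
  by apply: van_perm va => x; exact: pmap_diag.
apply: funext => A; rewrite /cscale.
case: (pselect (bb A)) => hA; last first.
  rewrite pushfaceN // spermuteE pushfaceN ?mulr0 //.
  by move/pmap_pre_bbE.
rewrite (pushfaceE _ hp mp a0 vp hA) spermuteE.
rewrite spermuteE (pushfaceE _ hp m1 a0 va (pmap_pre_bb _ hA)).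
rewrite mulrA -signr_addb -odd_tperm.
congr (_ * mu _); apply/seteqP; split => x /=.
  move=> [h1 h2]; split; first by rewrite -face_pmap.
  by move: h2; rewrite (pmap_diag s).
move=> [h1 h2]; split; first by rewrite face_pmap.
by rewrite (pmap_diag s).
Qed.

Lemma bd_perm n (s : {perm 'I_n.+2}) (mu : cchain M n.+1) : coarse_chain mu ->
  boundary (spermute s mu) =
  (fun A => \sum_(j < n.+2) (-1) ^+ j * spermute (tperm s (s^-1 j)%g) (pushface j mu) A).
Proof.
move=> hmu; apply: funext => A; rewrite /boundary.
rewrite [RHS](reindex_inj (@perm_inj _ s)) /=.
apply: eq_bigr => i _; rewrite push_perm // /cscale permK mulrA.
congr (_ * _).
rewrite -signr_odd -signr_addb addbA addbb /=.
by rewrite signr_odd.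
Qed.

Lemma bd_zero n : boundary (@czero R M n.+2) = @czero R M n.+1.
Proof.
apply: funext => A; rewrite /boundary /czero big1 // => i _.
by rewrite /pushface; case: ifP => _; rewrite mulr0.
Qed.

Lemma bd_sum n m (g : 'I_m -> cchain M n.+1) : (forall j, coarse_chain (g j)) ->
  boundary (fun A => \sum_(j < m) g j A) = (fun A => \sum_(j < m) boundary (g j) A).
Proof.
elim: m g => [|m IH] g hg.
  rewrite (_ : (fun A => _) = @czero R M n.+2); last by apply: funext => A; rewrite big_ord0.
  by rewrite bd_zero; apply: funext => A; rewrite big_ord0.
have e : (fun A => \sum_(j < m.+1) g j A) =
   cadd (fun A => \sum_(j < m) g (widen_ord (leqnSn m) j) A) (g ord_max).
  by apply: funext => A; rewrite big_ord_recr.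
rewrite e bd_add //; last first.
  by apply: (sum_closed (P := @coarse_chain R M n.+1)) => //; [exact: cc_zero|exact: cc_add].
rewrite IH //; apply: funext => A; rewrite /cadd.
by rewrite [RHS]big_ord_recr.
Qed.

Lemma Alt_bd F n (nu : cchain M n.+1) : famOK F -> Alt F nu -> Alt F (boundary nu).
Proof.
move=> hF hnu; have := hnu.
move=> [m1 [c1 [f1 [s1 [h1 e]]]]].
have cf : forall j, coarse_chain (f1 j) by move=> j; case: (h1 j).
have cg : forall j, coarse_chain (cscale (c1 j) (csub (f1 j) (spermute (s1 j) (f1 j)))).
  move=> j; apply: cc_scale; rewrite csubE; apply: cc_add => //.
  by apply: cc_scale; apply: cc_perm.
rewrite (_ : nu = fun A => \sum_(j < m1) (cscale (c1 j) (csub (f1 j) (spermute (s1 j) (f1 j)))) A);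
  last by rewrite e.
rewrite bd_sum //.
apply: Alt_sum => j.
rewrite bd_scale; last by rewrite csubE; apply: cc_add => //; apply: cc_scale; apply: cc_perm.
apply: Alt_scale.
rewrite bd_sub //; last exact: cc_perm.
rewrite bd_perm //.
rewrite (_ : csub _ _ = fun A => \sum_(k < n.+2) cscale ((-1) ^+ k)
   (fun B => pushface k (f1 j) B - spermute (tperm (s1 j) ((s1 j)^-1 k)%g) (pushface k (f1 j)) B) A).
  apply: Alt_sum => k; apply: Alt_scale; apply: Alt_basic.
  exact: CX_push.
apply: funext => A; rewrite /csub /boundary /cscale -sumrB.
by apply: eq_bigr => k _; rewrite mulrBr.
exact: hp.
Qed.

End P11.

Set Implicit Arguments.
Unset Strict Implicit.
Unset Printing Implicit Defensive.

Theorem proposition3p10 (R : realType) (M : metricType R) (FX FY : set (set M)) :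
  proper_space M -> big_family FX -> big_family FY ->
  let FI := fcap FX FY in
  let FU := fcup FX FY in
  let fams := fun FZ : set (set M) => [\/ FZ = FI, FZ = FX, FZ = FY | FZ = FU] in
  (forall FZ, fams FZ ->
     (forall n (mu : cchain M n.+1), CX FZ mu -> CX FZ (boundary mu)) /\
     (forall n (mu : cchain M n.+2), CX FZ mu -> boundary (boundary mu) = @chain0 R M n)) /\
  (forall n,
     (forall mu : cchain M n, CX FI mu -> CX FX mu /\ CX FY mu) /\
     (forall mu1 mu2 : cchain M n, CX FX mu1 -> CX FY mu2 -> CX FU (csub mu1 mu2)) /\
     (forall mu1 mu2 : cchain M n.+1, CX FX mu1 -> CX FY mu2 ->
        boundary (csub mu1 mu2) = csub (boundary mu1) (boundary mu2)) /\
     (forall mu nu : cchain M n, CX FI mu -> CX FI nu -> (mu, mu) = (nu, nu) -> mu = nu) /\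
     (forall mu1 mu2 : cchain M n, CX FX mu1 -> CX FY mu2 ->
        (csub mu1 mu2 = @chain0 R M n <-> exists mu, [/\ CX FI mu, mu1 = mu & mu2 = mu])) /\
     (forall nu : cchain M n, CX FU nu ->
        exists mu1 mu2, [/\ CX FX mu1, CX FY mu2 & nu = csub mu1 mu2])) /\
  (forall FZ, fams FZ ->
     forall n (mu : cchain M n.+1), Alt FZ mu -> Alt FZ (boundary mu)) /\
  (forall n,
     (forall mu : cchain M n, Alt FI mu -> Alt FX mu /\ Alt FY mu) /\
     (forall mu1 mu2 : cchain M n, Alt FX mu1 -> Alt FY mu2 -> Alt FU (csub mu1 mu2)) /\
     (forall mu : cchain M n, CX FI mu -> Alt FX mu -> Alt FY mu -> Alt FI mu) /\
     (forall mu1 mu2 : cchain M n, CX FX mu1 -> CX FY mu2 ->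
        (Alt FU (csub mu1 mu2) <->
         exists mu, [/\ CX FI mu, Alt FX (csub mu1 mu) & Alt FY (csub mu2 mu)])) /\
     (forall nu : cchain M n, CX FU nu ->
        exists mu1 mu2, [/\ CX FX mu1, CX FY mu2 & Alt FU (csub nu (csub mu1 mu2))])).
Proof.
move=> hp bX bY FI FU fams.
have okI : famOK FI := famOK_I bX bY.
have okU : famOK FU := famOK_U bX bY.
have okX := big_famOK bX; have okY := big_famOK bY.
have okF : forall FZ, fams FZ -> famOK FZ by move=> FZ [->|->|->|->].
have altU : forall n (a b : cchain M n), Alt FX a -> Alt FY b -> Alt FU (csub a b).
  move=> n a b ha hb; rewrite csubE; apply: Alt_add.
    by apply: Alt_mono ha => nu; exact: CX_mono (famsub_XU (FX := FX) bY).
  by apply: Alt_scale; apply: Alt_mono hb => nu; exact: CX_mono (famsub_YU (FY := FY) bX).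
split.
  move=> FZ hZ; split.
    by move=> n mu h; have := CX_bd hp (okF _ hZ) h.
  move=> n mu [c _]. have := bdbd hp c. exact.
split.
  move=> n; split; [|split; [|split; [|split; [|split]]]].
  - move=> mu h; split.
      exact: CX_mono (@famsub_IX R M FX FY) h.
    exact: CX_mono (@famsub_IY R M FX FY) h.
  - move=> mu1 mu2 h1 h2; apply: (CX_sub okU).
      exact: CX_mono (famsub_XU (FX := FX) bY) h1.
    exact: CX_mono (famsub_YU (FY := FY) bX) h2.
  - by move=> mu1 mu2 [c1 _] [c2 _]; have := bd_sub hp c1 c2.
  - by move=> mu nu _ _ [].
  - move=> mu1 mu2 h1 h2; split.
      move=> e.
      have e' : mu1 = mu2.
        apply: funext => A; have := congr1 (fun f => f A) e.
        by rewrite /csub /chain0 => /eqP; rewrite subr_eq0 => /eqP.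
      exists mu1; split => //; apply: (CX_inter bX bY h1); by rewrite e'.
    by move=> [mu [h -> ->]]; apply: funext => A; rewrite /csub /chain0 subrr.
  - by move=> nu h; have := CX_split bX bY hp h.
split.
  by move=> FZ hZ n mu h; have := Alt_bd hp (okF _ hZ) h.
move=> n; split; [|split; [|split; [|split]]].
- move=> mu h; split.
    by apply: Alt_mono h => nu; exact: CX_mono (@famsub_IX R M FX FY).
  by apply: Alt_mono h => nu; exact: CX_mono (@famsub_IY R M FX FY).
- exact: altU.
- move=> mu h hX hY; apply: Alt_of_P0 h _; exact: Alt_P0 hX.
- move=> mu1 mu2 h1 h2; split.
    move=> hA.
    have P0 := Alt_P0 hA; rewrite Palt_sub in P0.
    have ePP : Palt mu1 = Palt mu2.
      apply: funext => A; have := congr1 (fun f => f A) P0.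
      by rewrite /csub /czero => /eqP; rewrite subr_eq0 => /eqP.
    exists (Palt mu1); split.
    + apply: (CX_inter bX bY); first exact: CX_Palt okX h1.
      by rewrite ePP; exact: CX_Palt okY h2.
    + exact: Alt_decomp h1.
    + by rewrite ePP; exact: Alt_decomp h2.
  move=> [mu [h hXa hYa]].
  have -> : csub mu1 mu2 = csub (csub mu1 mu) (csub mu2 mu).
    by apply: funext => A; rewrite /csub; ring.
  exact: altU.
- move=> nu h; have [mu1 [mu2 [h1 h2 e]]] := CX_split bX bY hp h.
  exists mu1, mu2; split => //.
  rewrite (_ : csub nu (csub mu1 mu2) = @czero R M n.+1); first exact: Alt_zero.
  by rewrite -e; apply: funext => A; rewrite /csub /czero subrr.
Qed.
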